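(* Let $T_5=\{(x,y)\in\mathbb{N}^2 : x+y\le 6\}$. Then $\mathrm{gon}(R(T_5))=10$.
   Context: $\mathbb{N}=\{1,2,3,\dots\}$. For a Ferrers diagram $F\subset\mathbb{N}^2$, the Ferrers rook graph $R(F)$ is the simple graph with vertex set $F$ in which distinct $(x,y),(x',y')$ are adjacent iff $x=x'$ or $y=y'$. Divisors on a graph: functions $D:V\to\mathbb{Z}$, degree $\sum_v D(v)$; firing a vertex $v$ means $v$ loses $\deg(v)$ chips and each neighbor gains one; divisors are equivalent if related by a sequence of firings; $\vert D\vert$ is the set of effective (nonnegative) divisors equivalent to $D$; $D$ has positive rank if for every vertex $v$ some $D'\in\vert D\vert$ has $D'(v)>0$. The gonality $\mathrm{gon}(G)$ is the minimum degree of a divisor on $G$ with positive rank. *)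

(* Defs.v *)
From mathcomp Require Import all_boot all_order all_algebra.
From Stdlib Require Import Relations.
Set Implicit Arguments. Unset Strict Implicit. Unset Printing Implicit Defensive.
Import GRing.Theory Num.Theory.
Local Open Scope ring_scope.

(* adj : rel V is assumed symmetric and irreflexive (true for rook graphs). *)

Definition div_deg (V : finType) (D : V -> int) : int := \sum_(v : V) D v.

Definition vdeg (V : finType) (adj : rel V) (v : V) : nat := #|[set w | adj v w]|.

Definition fire (V : finType) (adj : rel V) (D : V -> int) (v : V) : V -> int :=
  fun w => if w == v then D w - (vdeg adj v)%:Z
           else if adj v w then D w + 1 else D w.

Definition fires (V : finType) (adj : rel V) (D D' : V -> int) : Prop :=
  exists v, D' =1 fire adj D v.

Definition div_equiv (V : finType) (adj : rel V) : relation (V -> int) :=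
  clos_refl_sym_trans _ (@fires V adj).

Definition effective (V : finType) (D : V -> int) : Prop := forall v, 0 <= D v.

Definition positive_rank (V : finType) (adj : rel V) (D : V -> int) : Prop :=
  forall v, exists D', div_equiv adj D D' /\ effective D' /\ 0 < D' v.

Definition is_gonality (V : finType) (adj : rel V) (g : int) : Prop :=
  (exists D : V -> int, positive_rank adj D /\ div_deg D = g) /\
  (forall D : V -> int, positive_rank adj D -> g <= div_deg D).

Definition rook_adj (V : finType) (pos : V -> nat * nat) : rel V :=
  fun p q => (p != q) && (((pos p).1 == (pos q).1) || ((pos p).2 == (pos q).2)).

(* T_5 = {(x,y) in N^2 : x + y <= 6}, N = {1,2,...}; coordinates are < 7 *)
Definition T5 : Type :=
  {p : 'I_7 * 'I_7 | [&& (0 < p.1)%N, (0 < p.2)%N & (p.1 + p.2 <= 6)%N]}.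

Definition T5_pos (c : T5) : nat * nat := (nat_of_ord (val c).1, nat_of_ord (val c).2).

(* Main.v *)
Require Import Defs.
From mathcomp Require Import all_boot all_order all_algebra.
From mathcomp Require Import ring lra zify.
From Stdlib Require Import Relations FunctionalExtensionality.
Set Implicit Arguments. Unset Strict Implicit. Unset Printing Implicit Defensive.
Import Order.TTheory GRing.Theory Num.Theory.

Local Close Scope ring_scope.
Local Open Scope ring_scope.

Definition lap (V : finType) (adj : rel V) (g : V -> int) (u : V) : int :=
  (vdeg adj u)%:Z * g u - \sum_(x | adj u x) g x.

Lemma vdegE (V : finType) (adj : rel V) u : ((vdeg adj u)%:Z) = \sum_(x | adj u x) 1.
Proof. by rewrite /vdeg -sum1dep_card -natz natr_sum. Qed.

Lemma lap_alt (V : finType) (adj : rel V) g u :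
  lap adj g u = \sum_(x | adj u x) (g u - g x).
Proof.
rewrite /lap sumrB vdegE mulr_suml; congr (_ - _).
by apply: eq_bigr => x _; rewrite mul1r.
Qed.

Lemma lapD (V : finType) (adj : rel V) g h u :
  lap adj (fun x => g x + h x) u = lap adj g u + lap adj h u.
Proof. rewrite !lap_alt -big_split /=; apply: eq_bigr => x _; ring. Qed.

Lemma lapN (V : finType) (adj : rel V) g u :
  lap adj (fun x => - g x) u = - lap adj g u.
Proof. rewrite !lap_alt -sumrN; apply: eq_bigr => x _; ring. Qed.

Lemma lap0 (V : finType) (adj : rel V) u : lap adj (fun _ => 0) u = 0.
Proof. by rewrite lap_alt big1 // => x _; rewrite subrr. Qed.

Lemma fire_lap (V : finType) (adj : rel V) (Hs : ssrbool.symmetric adj) (Hi : ssrbool.irreflexive adj) D v :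
  fire adj D v = (fun w => D w - lap adj (fun x => ((x == v) : nat)%:Z) w).
Proof.
apply: functional_extensionality => w; rewrite /fire /lap.
have -> : \sum_(x | adj w x) (((x == v) : nat)%:Z) = ((adj w v : nat)%:Z).
  case Hwv: (adj w v).
    rewrite (bigD1 v) //= eqxx big1 ?addr0 // => x /andP [_ /negbTE ->]; done.
  by rewrite big1 // => x Hx; case: eqP Hx => // ->; rewrite Hwv.
case: eqP => [->|/eqP Hne]; first by rewrite Hi mulr1 subr0.
rewrite mulr0 sub0r opprK Hs; by case: (adj w v); rewrite ?addr0.
Qed.

Local Close Scope ring_scope.
Local Open Scope ring_scope.

Lemma equiv_lap (V : finType) (adj : rel V) (Hs : ssrbool.symmetric adj) (Hi : ssrbool.irreflexive adj) D D' :
  div_equiv adj D D' -> exists g, D' = (fun w => D w - lap adj g w).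
Proof.
elim => {D D'}.
- move=> D D' [v Hv]; exists (fun x => ((x == v) : nat)%:Z).
  by rewrite -fire_lap //; apply: functional_extensionality.
- move=> D; exists (fun _ => 0); apply: functional_extensionality => w.
  by rewrite lap0 subr0.
- move=> D D' _ [g ->]; exists (fun x => - g x); apply: functional_extensionality => w.
  by rewrite lapN opprK subrK.
- move=> D1 D2 D3 _ [g ->] _ [h ->]; exists (fun x => g x + h x).
  apply: functional_extensionality => w.
  rewrite (lapD adj g h w). ring.
Qed.

Lemma equiv_count (V : finType) (adj : rel V) (Hs : ssrbool.symmetric adj) (Hi : ssrbool.irreflexive adj) (s : seq V) D :
  div_equiv adj D (fun w => D w - lap adj (fun x => (count_mem x s)%:Z) w).
Proof.
elim: s D => [|y s IH] D /=.
  have -> : (fun w => D w - lap adj (fun x => 0%:Z) w) = D.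
    by apply: functional_extensionality => w; rewrite lap0 subr0.
  exact: rst_refl.
apply: (rst_trans _ _ _ (fire adj D y)).
  by apply: rst_step; exists y.
have -> : (fun w => D w - lap adj (fun x => ((y == x) + count_mem x s)%N%:Z) w)
          = (fun w => fire adj D y w - lap adj (fun x => (count_mem x s)%:Z) w).
  apply: functional_extensionality => w; rewrite fire_lap //.
  have -> : (fun x => ((y == x) + count_mem x s)%N%:Z) =
            (fun x => ((x == y) : nat)%:Z + (count_mem x s)%:Z).
    by apply: functional_extensionality => x; rewrite PoszD eq_sym.
  by rewrite lapD opprD addrA.
exact: IH.
Qed.

Lemma equiv_add (V : finType) (adj : rel V) D D' F :
  div_equiv adj D D' -> div_equiv adj (fun w => D w + F w) (fun w => D' w + F w).
Proof.
elim => {D D'}.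
- move=> D D' [v Hv]; apply: rst_step; exists v => w.
  by rewrite Hv /fire; case: eqP => _; [|case: (adj v w)]; ring.
- by move=> D; apply: rst_refl.
- by move=> D D' _ H; apply: rst_sym.
- by move=> D1 D2 D3 _ H1 _ H2; apply: rst_trans H2.
Qed.

Lemma lap_sum (V : finType) (adj : rel V) (Hs : ssrbool.symmetric adj) g :
  \sum_w lap adj g w = 0.
Proof.
rewrite /lap sumrB; apply/eqP; rewrite subr_eq0; apply/eqP.
rewrite (exchange_big_dep xpredT) //=.
apply: eq_bigr => x _.
rewrite vdegE mulr_suml; apply: eq_big => [w|w _]; [by rewrite Hs | ring].
Qed.

Local Close Scope ring_scope.
Local Open Scope ring_scope.

Lemma pos_equiv (V : finType) (adj : rel V) D E :
  positive_rank adj D -> div_equiv adj D E -> positive_rank adj E.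
Proof.
move=> HD HDE v; case: (HD v) => D' [H1 H2]; exists D'; split => //.
by apply: rst_trans H1; apply: rst_sym.
Qed.

Lemma pos_add (V : finType) (adj : rel V) D F :
  positive_rank adj D -> effective F -> positive_rank adj (fun w => D w + F w).
Proof.
move=> HD HF v; case: (HD v) => D' [H1 [H2 H3]].
exists (fun w => D' w + F w); split; first exact: equiv_add.
split; first by move=> w; apply: addr_ge0.
by apply: (lt_le_trans H3); rewrite lerDl.
Qed.

Lemma deg_equiv (V : finType) (adj : rel V) (Hs : ssrbool.symmetric adj) (Hi : ssrbool.irreflexive adj) D D' :
  div_equiv adj D D' -> div_deg D' = div_deg D.
Proof.
case/(equiv_lap Hs Hi) => g ->; rewrite /div_deg sumrB lap_sum //; exact: subr0.
Qed.

Lemma key (V : finType) (adj : rel V) (Hs : ssrbool.symmetric adj) (Hi : ssrbool.irreflexive adj) E v :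
  E v <= 0 -> (exists E', div_equiv adj E E' /\ effective E' /\ 0 < E' v) ->
  exists T : pred V, ~~ T v /\ (exists u, T u) /\
    forall u, T u -> (#|[set w | adj u w && ~~ T w]|)%:Z <= E u.
Proof.
move=> Ev [E' [HE [Heff Hv]]].
case: (equiv_lap Hs Hi HE) => g HE'; subst E'.
case: (@arg_maxP _ _ _ v xpredT g isT) => m _ Hm.
have Hle : forall x, g x <= g m by move=> x; exact: Hm.
pose T := fun x => g x == g m.
have lapge : forall u, T u -> (#|[set w | adj u w && ~~ T w]|)%:Z <= lap adj g u.
  move=> u /eqP Tu; rewrite lap_alt -sum1dep_card -natz natr_sum big_mkcondr /=.
  apply: ler_sum => x Hx; rewrite /T Tu.
  case: eqP => [->|/eqP Hne] /=; first by rewrite subrr.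
  have := Hle x; rewrite le_eqVlt (negbTE Hne) /= => Hlt; lia.
exists T; split; last split.
- apply/negP => Tv.
  have : 0 <= lap adj g v.
    rewrite lap_alt; apply: sumr_ge0 => x _; rewrite subr_ge0.
    by move/eqP: Tv => ->; exact: Hle.
  move=> H0; lra.
- by exists m; rewrite /T.
- move=> u Tu; apply: (le_trans (lapge u Tu)).
  by move: (Heff u); rewrite subr_ge0.
Qed.

Local Close Scope ring_scope.


Definition VT : finType := [the finType of T5].

Definition mk (a b : nat) (Ha : (a < 7)%N) (Hb : (b < 7)%N)
  (H : [&& (0 < a)%N, (0 < b)%N & (a + b <= 6)%N]) : VT :=
  exist (fun p : 'I_7 * 'I_7 => [&& (0 < p.1)%N, (0 < p.2)%N & (p.1 + p.2 <= 6)%N])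
    (Ordinal Ha, Ordinal Hb) H.

Arguments mk : clear implicits.
Definition eT : seq VT := [::
mk 1 1 isT isT isT;
  mk 1 2 isT isT isT;
  mk 1 3 isT isT isT;
  mk 1 4 isT isT isT;
  mk 1 5 isT isT isT;
  mk 2 1 isT isT isT;
  mk 2 2 isT isT isT;
  mk 2 3 isT isT isT;
  mk 2 4 isT isT isT;
  mk 3 1 isT isT isT;
  mk 3 2 isT isT isT;
  mk 3 3 isT isT isT;
  mk 4 1 isT isT isT;
  mk 4 2 isT isT isT;
  mk 5 1 isT isT isT].
Definition crd : seq (nat * nat) := [:: (1,1); (1,2); (1,3); (1,4); (1,5); (2,1); (2,2); (2,3); (2,4); (3,1); (3,2); (3,3); (4,1); (4,2); (5,1)].

Lemma eT_pos : map T5_pos eT = crd. Proof. by []. Qed.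

Lemma T5_pos_inj : injective (T5_pos : VT -> nat * nat).
Proof.
move=> [[a b] Hab] [[c d] Hcd] /= [] /ord_inj Eac /ord_inj Ebd.
by apply: val_inj => /=; rewrite Eac Ebd.
Qed.

Lemma eT_uniq : uniq eT.
Proof. by rewrite -(map_inj_uniq T5_pos_inj) eT_pos. Qed.

Lemma crd_all : forall a b : nat, (a < 7)%N -> (b < 7)%N ->
  [&& (0 < a)%N, (0 < b)%N & (a + b <= 6)%N] -> (a, b) \in crd.
Proof.
have H : all (fun a => all (fun b => [&& (0 < a)%N, (0 < b)%N & (a + b <= 6)%N] ==> ((a, b) \in crd)) (iota 0 7)) (iota 0 7) by [].
move=> a b Ha Hb Hc; move/allP: H => /(_ a); rewrite mem_iota Ha => /(_ isT) /allP /(_ b).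
by rewrite mem_iota Hb => /(_ isT) /implyP; apply.
Qed.

Lemma memT (x : VT) : x \in eT.
Proof.
have : T5_pos x \in map T5_pos eT.
  rewrite eT_pos; case: x => [[a b] H] /=; apply: crd_all => //.
case/mapP => y Hy /T5_pos_inj ->; done.
Qed.

Lemma size_eT : size eT = 15%N. Proof. by []. Qed.

Definition x0 : VT := mk 1 1 isT isT isT.
Definition elem (i : nat) : VT := nth x0 eT i.
Definition idx (x : VT) : nat := index x eT.

Lemma idx_lt x : (idx x < 15)%N.
Proof. by rewrite /idx -size_eT index_mem memT. Qed.
Lemma elem_idx x : elem (idx x) = x.
Proof. by rewrite /elem /idx nth_index // memT. Qed.
Lemma idx_elem i : (i < 15)%N -> idx (elem i) = i.
Proof. by move=> Hi; rewrite /elem /idx index_uniq // ?size_eT // eT_uniq. Qed.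

Lemma eT_map : eT = map elem (iota 0 15).
Proof. by rewrite -size_eT /elem -/(mkseq _ _) mkseq_nth. Qed.

Lemma sum_VT (R : nmodType) (F : VT -> R) :
  (\sum_(x : VT) F x = \sum_(i <- iota 0 15) F (elem i))%R.
Proof.
have -> : (\sum_(i <- iota 0 15) F (elem i) = \sum_(x <- eT) F x)%R by rewrite eT_map big_map.
have Hp : perm_eq (enum VT) eT.
  apply: uniq_perm; [exact: enum_uniq | exact: eT_uniq | ] => x.
  by rewrite mem_enum memT.
by rewrite -(perm_big _ Hp) big_enum.
Qed.

Local Close Scope ring_scope.

Definition cadjc (i j : nat) : bool :=
  (i != j) && (((nth (0,0) crd i).1 == (nth (0,0) crd j).1) || ((nth (0,0) crd i).2 == (nth (0,0) crd j).2)).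

Definition nbl : seq (seq nat) := [:: [:: 1; 2; 3; 4; 5; 9; 12; 14]; [:: 0; 2; 3; 4; 6; 10; 13]; [:: 0; 1; 3; 4; 7; 11]; [:: 0; 1; 2; 4; 8]; [:: 0; 1; 2; 3]; [:: 0; 6; 7; 8; 9; 12; 14]; [:: 1; 5; 7; 8; 10; 13]; [:: 2; 5; 6; 8; 11]; [:: 3; 5; 6; 7]; [:: 0; 5; 10; 11; 12; 14]; [:: 1; 6; 9; 11; 13]; [:: 2; 7; 9; 10]; [:: 0; 5; 9; 13; 14]; [:: 1; 6; 10; 12]; [:: 0; 5; 9; 12]].

Lemma nbl_ok i : (i < 15)%N -> nth [::] nbl i = [seq j <- iota 0 15 | cadjc i j].
Proof.
have H : all (fun i => nth [::] nbl i == [seq j <- iota 0 15 | cadjc i j]) (iota 0 15) by vm_compute.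
by move=> Hi; move/allP: H => /(_ i); rewrite mem_iota Hi => /(_ isT) /eqP.
Qed.

Lemma adj_elem i j : (i < 15)%N -> (j < 15)%N -> rook_adj T5_pos (elem i) (elem j) = cadjc i j.
Proof.
move=> Hi Hj; rewrite /rook_adj /cadjc /elem (nth_uniq x0) ?size_eT // ?eT_uniq //.
have E k : (k < 15)%N -> T5_pos (nth x0 eT k) = nth (0,0) crd k.
  by move=> Hk; rewrite -eT_pos (nth_map x0) ?size_eT.
by rewrite !E.
Qed.

Lemma adjE (x y : VT) : rook_adj T5_pos x y = cadjc (idx x) (idx y).
Proof. rewrite -{1}(elem_idx x) -{1}(elem_idx y); apply: adj_elem; exact: idx_lt. Qed.

Lemma sum_count (T : Type) (P : pred T) (s : seq T) :
  (\sum_(i <- s) (if P i then 1 else 0))%N = count P s.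
Proof. elim: s => [|a s IH]; first by rewrite big_nil. rewrite big_cons IH /=; by case: (P a). Qed.

Lemma card_VT (P : pred VT) : #|[set x | P x]| = count (fun i => P (elem i)) (iota 0 15).
Proof. by rewrite -sum1dep_card big_mkcond /= sum_VT sum_count. Qed.

Lemma vdeg_elem i : (i < 15)%N -> vdeg (rook_adj T5_pos) (elem i) = size (nth [::] nbl i).
Proof.
move=> Hi; rewrite /vdeg card_VT nbl_ok // size_filter.
by apply: eq_in_count => j; rewrite mem_iota /= => Hj; rewrite adj_elem.
Qed.

Local Open Scope ring_scope.

Lemma sumZ (l : seq nat) (f : nat -> nat) :
  \sum_(j <- l) (f j)%:Z = (sumn [seq f j | j <- l])%:Z.
Proof. elim: l => [|a l IH]; first by rewrite big_nil. by rewrite big_cons IH /= PoszD. Qed.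

Lemma nbsum_elem i (G : VT -> int) : (i < 15)%N ->
  \sum_(x | rook_adj T5_pos (elem i) x) G x = \sum_(j <- nth [::] nbl i) G (elem j).
Proof.
move=> Hi; rewrite big_mkcond /= sum_VT nbl_ok // big_filter [RHS]big_mkcond.
by apply: eq_big_seq => j; rewrite mem_iota /= => Hj; rewrite adj_elem.
Qed.

Local Close Scope ring_scope.

Definition rows : seq (seq bool) :=
[:: [:: false; true; true; true; true; true; false; false; false; true; false; false; true; false; true];
 [:: true; false; true; true; true; false; true; false; false; false; true; false; false; true; false];
 [:: true; true; false; true; true; false; false; true; false; false; false; true; false; false; false];
 [:: true; true; true; false; true; false; false; false; true; false; false; false; false; false; false];
 [:: true; true; true; true; false; false; false; false; false; false; false; false; false; false; false];
 [:: true; false; false; false; false; false; true; true; true; true; false; false; true; false; true];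
 [:: false; true; false; false; false; true; false; true; true; false; true; false; false; true; false];
 [:: false; false; true; false; false; true; true; false; true; false; false; true; false; false; false];
 [:: false; false; false; true; false; true; true; true; false; false; false; false; false; false; false];
 [:: true; false; false; false; false; true; false; false; false; false; true; true; true; false; true];
 [:: false; true; false; false; false; false; true; false; false; true; false; true; false; true; false];
 [:: false; false; true; false; false; false; false; true; false; true; true; false; false; false; false];
 [:: true; false; false; false; false; true; false; false; false; true; false; false; false; true; true];
 [:: false; true; false; false; false; false; true; false; false; false; true; false; true; false; false];
 [:: true; false; false; false; false; true; false; false; false; true; false; false; true; false; false]].

Lemma rows_ok i j : (i < 15)%N -> (j < 15)%N -> nth false (nth [::] rows i) j = cadjc i j.
Proof.
have H : all (fun i => all (fun j => nth false (nth [::] rows i) j == cadjc i j) (iota 0 15)) (iota 0 15) by vm_compute.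
move=> Hi Hj; move/allP: H => /(_ i); rewrite mem_iota Hi => /(_ isT) /allP /(_ j).
by rewrite mem_iota Hj => /(_ isT) /eqP.
Qed.

Lemma size_rows i : (i < 15)%N -> size (nth [::] rows i) = 15%N.
Proof.
have H : all (fun i => size (nth [::] rows i) == 15%N) (iota 0 15) by vm_compute.
by move=> Hi; move/allP: H => /(_ i); rewrite mem_iota Hi => /(_ isT) /eqP.
Qed.

Fixpoint cnt2 (r b : seq bool) : nat :=
  match r, b with x :: r', y :: b' => ((x && y) : nat) + cnt2 r' b' | _, _ => 0 end.
Definition bstep (E : seq nat) (b : seq bool) : seq bool :=
  [seq nth false b i || (nth 0 E i < cnt2 (nth [::] rows i) b) | i <- iota 0 15].
Fixpoint bloop (E : seq nat) (n : nat) (b : seq bool) : seq bool :=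
  match n with 0 => b | n'.+1 => let b' := bstep E b in if b' == b then b else bloop E n' b' end.
Definition burnset (E : seq nat) (v : nat) := bloop E 15 [seq i == v | i <- iota 0 15].
Definition burnsall E v := all id (burnset E v).

Lemma cnt2E r b : cnt2 r b = count (fun j => nth false r j && nth false b j) (iota 0 (size r)).
Proof.
elim: r b => [|x r IH] b; first by case: b.
case: b => [|y b] /=.
  rewrite andbF add0n; apply/esym/eqP; rewrite -leqn0 leqNgt -has_count; apply/hasPn => j _; by rewrite nth_nil andbF.
rewrite IH -[in RHS](addn0 1%N) iotaDl count_map; congr (_ + _)%N.
Qed.

Lemma size_bstep E b : size (bstep E b) = 15%N.
Proof. by rewrite size_map size_iota. Qed.

Lemma bstep_nth E b i : (i < 15)%N ->
  nth false (bstep E b) i = nth false b i || (nth 0 E i < cnt2 (nth [::] rows i) b)%N.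
Proof. by move=> Hi; rewrite (nth_map 0) ?size_iota // nth_iota. Qed.

Lemma burn_sound (E : seq nat) v (P : nat -> bool) :
  (v < 15)%N -> ~~ P v ->
  (forall i, (i < 15)%N -> P i -> (count (fun j => cadjc i j && ~~ P j) (iota 0 15) <= nth 0 E i)%N) ->
  burnsall E v -> forall i, (i < 15)%N -> ~~ P i.
Proof.
move=> Hv HPv Hleg.
pose Inv := fun b : seq bool => forall i, nth false b i -> ~~ P i.
have Hstep : forall b, Inv b -> Inv (bstep E b).
  move=> b Hb i; case: (ltnP i 15) => Hi; last by rewrite nth_default // size_bstep.
  rewrite bstep_nth //; case/orP => [/Hb -> //|Hlt].
  apply/negP => Pi; have := Hleg i Hi Pi.
  have : (cnt2 (nth [::] rows i) b <= count (fun j => cadjc i j && ~~ P j) (iota 0 15))%N.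
    rewrite cnt2E size_rows //.
    rewrite (@eq_in_count _ _ (fun j => cadjc i j && nth false b j)); last first.
      by move=> j; rewrite mem_iota /= => Hj; rewrite rows_ok.
    apply: sub_count => j /= /andP [-> /Hb] //.
  move=> H1 H2; move: (leq_trans Hlt (leq_trans H1 H2)); by rewrite ltnn.
have Hloop : forall n b, Inv b -> Inv (bloop E n b).
  elim => [|n IH] b Hb //=; case: ifP => _ //; apply: IH; exact: Hstep.
have H0 : Inv [seq i == v | i <- iota 0 15].
  move=> i; case: (ltnP i 15) => Hi; last by rewrite nth_default // size_map size_iota.
  by rewrite (nth_map 0) ?size_iota // nth_iota // add0n => /eqP ->.
rewrite /burnsall /burnset => Hall i Hi.
have Hs : size (bloop E 15 [seq i == v | i <- iota 0 15]) = 15%N.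
  have : forall n b, size b = 15%N -> size (bloop E n b) = 15%N.
    elim => [|n IH] b Hb //=; case: ifP => _ //; apply: IH; exact: size_bstep.
  by apply; rewrite size_map size_iota.
apply: (Hloop 15%N _ H0); move/(all_nthP false): Hall; apply; by rewrite Hs.
Qed.

Local Close Scope ring_scope.

Lemma nat_list (V : finType) (g : V -> nat) : exists s : seq V, forall x, count_mem x s = g x.
Proof.
exists (flatten [seq nseq (g y) y | y <- enum V]) => x.
rewrite count_flatten -map_comp.
have -> : [seq (count_mem x \o (fun y => nseq (g y) y)) i | i <- enum V] =
          [seq ((y == x) * g y)%N | y <- enum V].
  by apply: eq_map => y /=; rewrite count_nseq.
rewrite sumnE big_map big_enum /= (bigD1 x) //= eqxx mul1n big1 ?addn0 //.
by move=> y /negbTE ->.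
Qed.

Lemma rook_sym (V : finType) (pos : V -> nat * nat) : ssrbool.symmetric (rook_adj pos).
Proof. by move=> p q; rewrite /rook_adj eq_sym [((pos p).1 == _)]eq_sym [((pos p).2 == _)]eq_sym. Qed.

Lemma rook_irr (V : finType) (pos : V -> nat * nat) : ssrbool.irreflexive (rook_adj pos).
Proof. by move=> p; rewrite /rook_adj eqxx. Qed.

Notation ADJ := (rook_adj T5_pos).

Local Open Scope ring_scope.

Lemma nbl_lt i j : (i < 15)%N -> j \in nth [::] nbl i -> (j < 15)%N.
Proof. by move=> Hi; rewrite nbl_ok // mem_filter mem_iota => /andP [_]. Qed.

Definition Sv (h : seq nat) i : nat := sumn [seq nth 0%N h j | j <- nth [::] nbl i].
Definition Qv (h : seq nat) i : nat := (size (nth [::] nbl i) * nth 0%N h i)%N.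

Lemma lap_glue (h : seq nat) i : (i < 15)%N ->
  lap ADJ (fun x => (nth 0%N h (idx x))%:Z) (elem i) =
  (Qv h i)%:Z - (Sv h i)%:Z.
Proof.
move=> Hi; rewrite /lap vdeg_elem // nbsum_elem // idx_elem // -sumZ PoszM.
congr (_ - _); apply: eq_big_seq => j Hj; rewrite idx_elem //; exact: nbl_lt Hj.
Qed.

Definition Bv (M h : seq nat) i : nat := (nth 0%N M i + Qv h i - Sv h i)%N.
Definition noUF (M h : seq nat) := all (fun i => Sv h i <= nth 0%N M i + Qv h i)%N (iota 0 15).
Definition cert_ok (c : nat * seq nat * seq nat) : bool :=
  let: (v, h, M) := c in [&& (v < 15)%N, nth 0%N M v == 0%N, burnsall M v & noUF M h].
Definition boxB (c : nat * seq nat * seq nat) : seq nat :=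
  let: (v, h, M) := c in [seq Bv M h i | i <- iota 0 15].

Lemma equiv_nat (D : VT -> int) (h : seq nat) :
  div_equiv ADJ D (fun w => D w - lap ADJ (fun x => (nth 0%N h (idx x))%:Z) w).
Proof.
case: (nat_list (fun x : VT => nth 0%N h (idx x))) => s Hs.
have <- : (fun x => (count_mem x s)%:Z) = (fun x : VT => (nth 0%N h (idx x))%:Z).
  by apply: functional_extensionality => x; rewrite Hs.
exact: (equiv_count (rook_sym T5_pos) (rook_irr T5_pos)).
Qed.

Lemma box_sound c (D : VT -> int) : cert_ok c ->
  (forall i, (i < 15)%N -> D (elem i) <= (nth 0%N (boxB c) i)%:Z) -> ~ positive_rank ADJ D.
Proof.
case: c => [[v h] M] /and4P [Hv HMv Hburn HUF] HD Hpos.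
set E := fun w => D w - lap ADJ (fun x => (nth 0%N h (idx x))%:Z) w.
have Heq := equiv_nat D h.
have HE : forall i, (i < 15)%N -> E (elem i) <= (nth 0%N M i)%:Z.
  move=> i Hi; rewrite /E lap_glue //.
  have := HD i Hi; rewrite (nth_map 0%N) ?size_iota // nth_iota // add0n /Bv.
  have := allP HUF i; rewrite mem_iota Hi => /(_ isT) Huf.
  rewrite -(subzn Huf) PoszD => H.
  have HH : ((nth 0%N M i)%:Z + (Qv h i)%:Z - (Sv h i)%:Z) - ((Qv h i)%:Z - (Sv h i)%:Z) = (nth 0%N M i)%:Z.
    by rewrite opprB addrA subrK addrK.
  rewrite -[X in _ <= X]HH lerD2r; exact: H.
have Hposv := pos_equiv Hpos Heq (elem v).
have E0 : E (elem v) <= 0 by have := HE v Hv; rewrite (eqP HMv).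
case: (key (rook_sym T5_pos) (rook_irr T5_pos) E0 Hposv) => T [HTv [[u Tu] Hleg]].
have Hleg' : forall i, (i < 15)%N -> T (elem i) ->
    (count (fun j => cadjc i j && ~~ T (elem j)) (iota 0 15) <= nth 0%N M i)%N.
  move=> i Hi Pi; have := Hleg (elem i) Pi; rewrite card_VT.
  rewrite (@eq_in_count _ _ (fun j => cadjc i j && ~~ T (elem j))); last first.
    by move=> j; rewrite mem_iota /= => Hj; rewrite adj_elem.
  move=> H1; have := le_trans H1 (HE i Hi); by rewrite lez_nat.
have := @burn_sound M v (fun i => T (elem i)) Hv HTv Hleg' Hburn (idx u) (idx_lt u).
by rewrite /= elem_idx Tu.
Qed.

Local Close Scope ring_scope.

Fixpoint mkbox (b : seq nat) : seq (nat * nat) :=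
  match b with [::] => [::] | c :: b' => let r := mkbox b' in (c, minn c (head (c, c) r).2) :: r end.

Fixpoint cov (n k : nat) (act : seq (seq (nat * nat))) : bool :=
  has (fun x => k <= (head (0, 0) x).2) act ||
  match n with 0 => k != 0 | n'.+1 =>
    all (fun a => cov n' (k - a) [seq behead x | x <- act & a <= (head (0, 0) x).1]) (iota 0 k.+1) end.

Lemma mkbox_min b i : i < size b -> (head (0, 0) (mkbox b)).2 <= nth 0 b i.
Proof.
elim: b i => [|c b IH] i //= Hi.
case: i Hi => [|i] Hi /=; first exact: geq_minl.
apply: leq_trans (geq_minr _ _) _.
case: b IH Hi => [|c' b'] IH Hi //=.
by apply: (IH i).
Qed.

Lemma nth_le_sumn (d : seq nat) i : nth 0 d i <= sumn d.
Proof. elim: d i => [|a d IH] [|i] //=; [exact: leq_addr | exact: leq_trans (IH i) (leq_addl _ _)]. Qed.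

Lemma mkbox_step a bs : (forall b, b \in bs -> 0 < size b) ->
  [seq behead x | x <- map mkbox bs & a <= (head (0, 0) x).1] =
  map mkbox [seq behead b | b <- bs & a <= head 0 b].
Proof.
move=> H; rewrite filter_map -!map_comp.
rewrite (@eq_in_filter _ _ (fun b => a <= head 0 b)); last first.
  by move=> b /H; case: b.
apply/eq_in_map => b; rewrite mem_filter => /andP [_ /H].
by case: b.
Qed.

Lemma cov_sound n : forall k bs, (forall b, b \in bs -> size b = n) -> cov n k (map mkbox bs) ->
  forall d, size d = n -> sumn d = k -> exists b, b \in bs /\ forall i, i < n -> nth 0 d i <= nth 0 b i.
Proof.
elim: n => [|n IH] k bs Hsz /orP [/hasP [x /mapP [b Hb ->] Hk] | Hrest] d Hd Hsum.
- exists b; split => // i; by rewrite ltn0.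
- by case: d Hd Hsum Hrest => // _ <-.
- exists b; split => // i Hi.
  apply: leq_trans (mkbox_min _) => //; last by rewrite Hsz.
  by apply: leq_trans (nth_le_sumn d i) _; rewrite Hsum.
- case: d Hd Hsum => [|a d'] //= [Hd'] Hsum.
  move/allP: Hrest => /(_ a); rewrite mem_iota add0n ltnS -Hsum leq_addr => /(_ isT).
  rewrite mkbox_step; last by move=> b Hb; rewrite Hsz.
  move/IH => /(_ _ d' Hd'); case.
  + move=> b /mapP [b0]; rewrite mem_filter => /andP [_ Hb0] ->; by rewrite size_behead Hsz.
  + by rewrite addKn.
  move=> b' [/mapP [b0]]; rewrite mem_filter => /andP [Ha Hb0] -> Hle.
  exists b0; split => // -[|i] Hi /=.
  + by case: b0 Ha Hb0 {Hle} => [|c b1].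
  + rewrite ltnS in Hi; rewrite -nth_behead; exact: Hle.
Qed.

Local Close Scope ring_scope.
Definition certs : seq (nat * seq nat * seq nat) := [::
(5, [:: 0; 0; 0; 0; 0; 0; 0; 0; 0; 0; 0; 0; 0; 0; 0], [:: 1; 2; 2; 3; 2; 0; 1; 3; 3; 0; 1; 0; 2; 3; 3]);
(6, [:: 0; 0; 0; 0; 0; 0; 0; 0; 0; 0; 0; 0; 0; 0; 0], [:: 3; 3; 3; 1; 3; 1; 0; 2; 0; 0; 1; 3; 2; 3; 1]);
(1, [:: 0; 0; 0; 0; 0; 0; 0; 0; 0; 0; 0; 0; 0; 0; 0], [:: 3; 0; 1; 0; 2; 2; 1; 3; 2; 0; 3; 3; 1; 2; 3]);
(7, [:: 0; 0; 0; 0; 0; 0; 0; 0; 0; 0; 0; 0; 0; 0; 0], [:: 3; 2; 1; 3; 1; 0; 3; 0; 3; 1; 4; 2; 2; 1; 0]);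
(7, [:: 0; 0; 0; 0; 0; 0; 0; 0; 0; 0; 0; 0; 0; 0; 0], [:: 1; 1; 0; 2; 3; 0; 3; 0; 2; 3; 3; 1; 1; 3; 3]);
(1, [:: 0; 0; 0; 0; 0; 0; 0; 0; 0; 0; 0; 0; 0; 0; 1], [:: 2; 0; 0; 1; 3; 2; 1; 0; 3; 4; 1; 2; 4; 2; 1]);
(1, [:: 0; 0; 0; 0; 0; 0; 0; 0; 0; 0; 0; 0; 0; 0; 0], [:: 0; 0; 2; 1; 3; 2; 2; 3; 2; 1; 0; 3; 3; 1; 3]);
(6, [:: 0; 0; 0; 0; 0; 0; 0; 0; 0; 0; 0; 0; 0; 0; 0], [:: 4; 0; 0; 2; 1; 2; 0; 3; 3; 1; 1; 1; 4; 2; 2]);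
(2, [:: 0; 0; 0; 0; 0; 0; 0; 0; 0; 0; 0; 0; 0; 0; 0], [:: 1; 2; 0; 4; 0; 3; 3; 3; 2; 0; 2; 2; 1; 1; 2]);
(12, [:: 0; 0; 0; 0; 0; 0; 0; 0; 0; 0; 0; 0; 0; 0; 0], [:: 2; 1; 3; 0; 2; 0; 2; 3; 3; 1; 3; 2; 0; 1; 3]);
(11, [:: 0; 0; 0; 0; 0; 0; 0; 0; 0; 0; 0; 0; 0; 0; 1], [:: 2; 1; 0; 3; 1; 6; 2; 2; 2; 3; 0; 0; 3; 1; 0]);
(12, [:: 0; 0; 0; 0; 0; 0; 0; 0; 0; 0; 0; 0; 0; 0; 0], [:: 2; 1; 4; 2; 2; 0; 0; 2; 1; 4; 2; 3; 0; 1; 2]);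
(3, [:: 0; 0; 0; 0; 0; 0; 0; 0; 0; 0; 0; 0; 0; 0; 0], [:: 0; 3; 1; 0; 2; 1; 2; 3; 0; 3; 1; 3; 3; 3; 1]);
(5, [:: 0; 0; 0; 0; 0; 0; 0; 0; 0; 0; 0; 0; 0; 0; 0], [:: 0; 3; 1; 2; 0; 0; 2; 1; 3; 3; 4; 1; 4; 1; 1]);
(9, [:: 0; 0; 0; 0; 0; 0; 0; 0; 0; 0; 0; 0; 0; 0; 0], [:: 2; 2; 5; 2; 2; 1; 2; 1; 1; 0; 2; 0; 0; 3; 3]);
(7, [:: 0; 0; 0; 0; 0; 0; 0; 0; 0; 0; 0; 0; 0; 0; 0], [:: 4; 0; 2; 1; 2; 2; 1; 0; 0; 5; 3; 1; 2; 1; 2]);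
(14, [:: 0; 0; 0; 0; 0; 0; 0; 0; 0; 0; 0; 0; 0; 0; 0], [:: 3; 1; 2; 3; 0; 1; 3; 1; 2; 0; 2; 3; 2; 3; 0]);
(1, [:: 0; 0; 0; 0; 0; 0; 0; 0; 0; 0; 0; 0; 0; 0; 0], [:: 1; 0; 3; 2; 1; 4; 2; 1; 3; 2; 0; 3; 0; 1; 3]);
(3, [:: 0; 0; 0; 0; 0; 0; 0; 0; 0; 0; 0; 0; 0; 0; 0], [:: 2; 3; 1; 0; 0; 3; 2; 4; 2; 1; 1; 2; 2; 3; 0]);
(4, [:: 0; 0; 0; 0; 0; 0; 0; 0; 0; 0; 0; 0; 0; 1; 0], [:: 1; 3; 2; 0; 0; 1; 3; 1; 3; 0; 4; 2; 4; 0; 2]);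
(0, [:: 0; 0; 0; 0; 0; 0; 0; 0; 0; 0; 0; 0; 0; 0; 0], [:: 0; 1; 2; 4; 2; 1; 4; 1; 1; 2; 4; 0; 3; 1; 0]);
(9, [:: 0; 0; 0; 0; 0; 0; 0; 0; 0; 0; 0; 0; 0; 0; 0], [:: 3; 2; 4; 2; 3; 2; 0; 1; 2; 0; 0; 2; 1; 1; 3]);
(12, [:: 0; 0; 0; 0; 0; 0; 0; 0; 0; 0; 0; 0; 0; 0; 0], [:: 1; 3; 1; 2; 3; 2; 0; 4; 2; 3; 2; 0; 0; 3; 0]);
(6, [:: 0; 0; 0; 0; 0; 0; 0; 0; 0; 0; 0; 1; 0; 0; 0], [:: 3; 3; 3; 3; 3; 0; 0; 3; 1; 2; 3; 0; 0; 1; 1]);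
(3, [:: 0; 0; 0; 0; 0; 0; 0; 0; 0; 0; 0; 0; 0; 0; 0], [:: 2; 3; 0; 0; 1; 1; 3; 2; 3; 2; 2; 3; 1; 0; 3]);
(1, [:: 0; 0; 0; 0; 0; 0; 0; 0; 1; 0; 0; 0; 0; 0; 0], [:: 0; 0; 2; 4; 1; 2; 4; 4; 0; 3; 3; 1; 1; 1; 0]);
(10, [:: 0; 0; 0; 0; 0; 0; 0; 0; 0; 0; 0; 0; 0; 0; 0], [:: 3; 2; 1; 4; 2; 2; 0; 1; 0; 1; 0; 2; 4; 2; 2]);
(0, [:: 0; 0; 0; 0; 0; 0; 0; 0; 0; 0; 0; 0; 0; 0; 0], [:: 0; 2; 1; 0; 3; 2; 4; 1; 0; 1; 4; 2; 3; 1; 2]);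
(12, [:: 0; 0; 0; 0; 1; 0; 0; 0; 0; 0; 0; 0; 0; 0; 0], [:: 3; 6; 4; 1; 0; 1; 2; 2; 1; 2; 0; 2; 0; 2; 0]);
(9, [:: 0; 0; 0; 0; 0; 0; 0; 0; 0; 0; 0; 0; 0; 0; 0], [:: 0; 1; 1; 2; 3; 4; 5; 1; 2; 0; 2; 2; 2; 0; 1]);
(8, [:: 0; 0; 0; 0; 1; 0; 0; 0; 0; 0; 0; 0; 0; 0; 0], [:: 3; 5; 2; 4; 0; 1; 2; 0; 0; 2; 2; 3; 1; 1; 0]);
(13, [:: 0; 0; 0; 0; 0; 0; 0; 0; 0; 0; 0; 0; 0; 0; 0], [:: 4; 1; 4; 1; 0; 2; 0; 2; 1; 5; 2; 0; 3; 0; 1]);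
(8, [:: 0; 0; 0; 0; 0; 0; 0; 0; 0; 0; 0; 0; 0; 0; 0], [:: 2; 1; 3; 1; 2; 0; 1; 4; 0; 4; 0; 1; 1; 3; 3]);
(13, [:: 0; 0; 0; 0; 0; 0; 0; 0; 0; 0; 0; 0; 0; 0; 0], [:: 1; 2; 5; 0; 2; 3; 0; 2; 3; 1; 1; 1; 4; 0; 1]);
(0, [:: 0; 0; 0; 0; 0; 0; 0; 0; 0; 0; 0; 0; 0; 1; 0], [:: 0; 6; 0; 1; 2; 2; 2; 1; 0; 1; 3; 2; 4; 0; 2]);
(12, [:: 0; 0; 0; 0; 0; 0; 0; 0; 0; 0; 0; 0; 0; 0; 0], [:: 1; 2; 0; 1; 3; 6; 3; 1; 1; 2; 2; 1; 0; 3; 0]);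
(11, [:: 0; 0; 0; 0; 0; 0; 0; 0; 0; 0; 0; 0; 0; 0; 1], [:: 1; 3; 1; 3; 3; 3; 0; 0; 1; 5; 1; 0; 2; 1; 2]);
(11, [:: 0; 0; 0; 0; 0; 0; 0; 0; 0; 0; 0; 0; 0; 0; 0], [:: 0; 3; 3; 3; 0; 1; 4; 1; 2; 1; 0; 0; 2; 3; 3]);
(4, [:: 0; 0; 0; 0; 0; 0; 0; 0; 0; 0; 0; 0; 0; 0; 0], [:: 0; 2; 3; 1; 0; 1; 1; 3; 3; 2; 2; 2; 4; 2; 0]);
(10, [:: 0; 0; 0; 0; 0; 0; 0; 0; 0; 0; 0; 0; 0; 0; 0], [:: 3; 4; 2; 3; 3; 0; 3; 2; 0; 2; 0; 2; 0; 0; 2]);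
(3, [:: 0; 0; 0; 0; 0; 0; 0; 0; 0; 0; 1; 0; 0; 0; 0], [:: 1; 5; 3; 0; 0; 2; 2; 4; 2; 3; 0; 2; 0; 1; 1]);
(14, [:: 0; 0; 0; 0; 0; 0; 0; 0; 0; 0; 0; 0; 0; 0; 0], [:: 1; 1; 2; 3; 3; 2; 1; 2; 0; 3; 3; 3; 0; 2; 0]);
(2, [:: 0; 0; 0; 0; 0; 0; 0; 0; 0; 0; 0; 0; 0; 0; 0], [:: 1; 4; 0; 3; 1; 4; 0; 1; 3; 1; 1; 0; 1; 3; 3]);
(14, [:: 0; 0; 0; 0; 0; 0; 0; 0; 1; 0; 0; 0; 0; 0; 0], [:: 2; 1; 5; 2; 2; 3; 5; 2; 0; 0; 1; 0; 1; 2; 0]);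
(7, [:: 0; 0; 0; 0; 0; 0; 0; 0; 0; 0; 0; 0; 0; 0; 0], [:: 2; 0; 1; 3; 1; 2; 4; 0; 2; 1; 2; 0; 4; 2; 2]);
(6, [:: 0; 0; 0; 0; 0; 0; 0; 0; 0; 0; 0; 0; 0; 0; 0], [:: 2; 1; 4; 0; 3; 6; 0; 0; 1; 1; 1; 1; 2; 3; 1]);
(10, [:: 0; 0; 0; 0; 0; 0; 0; 0; 0; 0; 0; 0; 0; 0; 0], [:: 2; 1; 1; 2; 3; 4; 2; 3; 1; 5; 0; 0; 0; 0; 2]);
(10, [:: 0; 0; 0; 0; 1; 0; 0; 0; 0; 0; 0; 0; 0; 0; 0], [:: 1; 2; 3; 3; 1; 0; 1; 4; 1; 3; 0; 2; 4; 0; 1]);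
(4, [:: 0; 0; 0; 0; 0; 0; 0; 0; 0; 0; 0; 0; 0; 0; 0], [:: 5; 0; 1; 2; 0; 4; 5; 1; 2; 1; 1; 1; 1; 0; 2]);
(2, [:: 0; 0; 0; 0; 0; 0; 0; 0; 0; 0; 0; 0; 0; 0; 0], [:: 7; 1; 0; 2; 2; 2; 1; 1; 0; 2; 2; 0; 3; 2; 1]);
(7, [:: 0; 0; 0; 0; 0; 0; 0; 0; 0; 0; 0; 0; 1; 0; 0], [:: 2; 1; 0; 0; 3; 3; 1; 0; 3; 3; 1; 3; 1; 2; 3]);
(1, [:: 0; 0; 0; 0; 0; 0; 0; 0; 0; 0; 0; 0; 0; 0; 0], [:: 3; 0; 4; 2; 1; 0; 2; 1; 3; 5; 1; 2; 1; 0; 1]);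
(6, [:: 0; 0; 0; 0; 1; 0; 0; 0; 0; 0; 0; 0; 0; 0; 0], [:: 5; 2; 1; 2; 0; 1; 0; 4; 1; 4; 0; 1; 1; 1; 3]);
(5, [:: 0; 0; 0; 0; 1; 0; 0; 0; 0; 0; 0; 0; 0; 0; 0], [:: 2; 5; 4; 2; 0; 0; 2; 0; 2; 1; 1; 0; 3; 3; 1]);
(12, [:: 0; 0; 1; 0; 0; 0; 0; 0; 0; 0; 0; 0; 0; 0; 0], [:: 6; 3; 0; 1; 3; 1; 2; 1; 3; 3; 0; 3; 0; 0; 0]);
(4, [:: 0; 0; 0; 0; 0; 0; 0; 0; 0; 0; 0; 0; 0; 0; 0], [:: 1; 4; 3; 0; 0; 3; 0; 1; 0; 4; 3; 1; 2; 3; 1]);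
(9, [:: 0; 0; 0; 0; 0; 0; 0; 0; 0; 0; 0; 0; 0; 0; 0], [:: 4; 0; 2; 4; 1; 2; 0; 3; 2; 0; 4; 1; 0; 2; 1]);
(4, [:: 0; 0; 0; 0; 0; 0; 0; 0; 0; 0; 0; 0; 0; 0; 0], [:: 4; 1; 2; 0; 0; 2; 3; 1; 1; 3; 1; 0; 2; 3; 3]);
(6, [:: 0; 0; 0; 0; 0; 0; 0; 0; 0; 0; 0; 0; 0; 0; 0], [:: 1; 0; 2; 4; 0; 3; 0; 1; 2; 2; 4; 2; 1; 1; 3]);
(4, [:: 0; 0; 0; 0; 0; 0; 0; 0; 0; 0; 0; 0; 0; 0; 0], [:: 1; 0; 3; 2; 0; 3; 5; 3; 1; 1; 1; 2; 0; 2; 2]);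
(1, [:: 0; 0; 0; 0; 0; 0; 0; 0; 0; 0; 0; 0; 0; 0; 0], [:: 1; 0; 0; 3; 3; 5; 1; 4; 0; 1; 2; 2; 2; 0; 2]);
(12, [:: 0; 0; 0; 0; 0; 0; 0; 0; 0; 0; 0; 0; 0; 0; 0], [:: 0; 2; 0; 3; 1; 1; 4; 1; 2; 3; 1; 3; 0; 3; 2]);
(14, [:: 0; 0; 0; 0; 0; 0; 0; 1; 0; 0; 0; 1; 0; 0; 0], [:: 0; 0; 3; 1; 2; 5; 3; 0; 1; 5; 2; 2; 1; 1; 0]);
(9, [:: 0; 0; 0; 0; 0; 0; 0; 0; 1; 0; 0; 0; 0; 0; 0], [:: 0; 1; 1; 3; 3; 6; 2; 3; 0; 0; 3; 0; 2; 1; 1]);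
(3, [:: 0; 0; 0; 0; 0; 0; 0; 0; 0; 0; 0; 0; 0; 0; 0], [:: 6; 2; 0; 0; 1; 3; 1; 2; 1; 1; 0; 2; 3; 3; 1]);
(0, [:: 0; 0; 0; 0; 0; 0; 0; 0; 0; 0; 0; 0; 0; 0; 0], [:: 0; 2; 4; 0; 1; 3; 1; 4; 1; 2; 3; 1; 1; 0; 3]);
(11, [:: 0; 0; 0; 0; 0; 0; 0; 0; 0; 0; 0; 0; 0; 0; 0], [:: 4; 5; 1; 2; 3; 1; 1; 2; 2; 0; 3; 0; 2; 0; 0]);
(9, [:: 0; 0; 0; 0; 0; 0; 0; 1; 0; 0; 0; 0; 0; 0; 0], [:: 2; 1; 3; 2; 0; 6; 3; 0; 2; 0; 2; 3; 0; 1; 1]);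
(5, [:: 0; 0; 0; 0; 0; 0; 0; 0; 0; 0; 0; 0; 0; 0; 0], [:: 2; 1; 2; 1; 3; 0; 3; 1; 3; 0; 0; 3; 4; 2; 1]);
(10, [:: 0; 0; 0; 1; 0; 0; 0; 0; 0; 0; 0; 0; 0; 0; 0], [:: 3; 1; 3; 1; 3; 0; 0; 1; 3; 5; 0; 2; 2; 2; 0]);
(0, [:: 0; 0; 0; 0; 0; 0; 0; 0; 1; 0; 0; 0; 0; 0; 0], [:: 0; 3; 1; 2; 0; 5; 2; 1; 2; 5; 0; 2; 1; 1; 1]);
(12, [:: 0; 0; 0; 0; 0; 0; 0; 0; 0; 0; 0; 0; 0; 0; 0], [:: 1; 6; 2; 1; 0; 2; 2; 1; 2; 0; 1; 3; 0; 2; 3]);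
(8, [:: 0; 0; 0; 0; 0; 0; 0; 0; 0; 0; 0; 0; 0; 0; 1], [:: 2; 2; 4; 1; 3; 2; 0; 1; 0; 1; 4; 1; 3; 2; 0]);
(2, [:: 0; 0; 0; 0; 0; 0; 0; 0; 0; 0; 0; 0; 0; 1; 0], [:: 3; 2; 0; 4; 1; 0; 1; 0; 2; 3; 2; 3; 4; 0; 1]);
(10, [:: 0; 0; 0; 0; 0; 0; 0; 0; 0; 0; 0; 0; 0; 0; 0], [:: 4; 5; 0; 1; 2; 0; 5; 3; 1; 1; 0; 0; 1; 1; 2]);
(7, [:: 0; 0; 0; 0; 0; 0; 0; 0; 0; 0; 0; 0; 0; 1; 0], [:: 0; 3; 1; 1; 2; 0; 2; 0; 3; 4; 2; 3; 2; 1; 2]);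
(7, [:: 0; 0; 0; 0; 0; 0; 0; 0; 0; 0; 0; 0; 0; 0; 0], [:: 6; 1; 3; 1; 1; 1; 2; 0; 0; 1; 2; 3; 4; 0; 1]);
(13, [:: 0; 0; 0; 0; 0; 0; 0; 1; 0; 0; 0; 0; 0; 0; 0], [:: 3; 0; 1; 2; 1; 5; 2; 0; 2; 3; 1; 2; 4; 0; 0]);
(10, [:: 0; 0; 0; 0; 0; 0; 0; 0; 0; 0; 0; 0; 0; 0; 0], [:: 0; 1; 3; 4; 1; 1; 0; 2; 1; 4; 0; 3; 2; 3; 1]);
(4, [:: 0; 0; 0; 0; 0; 0; 0; 0; 0; 0; 0; 0; 0; 0; 0], [:: 2; 5; 0; 1; 0; 1; 1; 3; 2; 5; 2; 2; 2; 0; 0]);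
(14, [:: 0; 0; 0; 0; 0; 0; 0; 0; 0; 0; 0; 0; 0; 1; 0], [:: 1; 1; 5; 1; 2; 0; 5; 2; 0; 3; 3; 0; 2; 1; 0]);
(12, [:: 0; 0; 0; 0; 0; 0; 0; 0; 0; 0; 0; 0; 0; 0; 0], [:: 3; 2; 4; 4; 0; 0; 2; 1; 0; 2; 3; 1; 0; 3; 1]);
(9, [:: 0; 0; 0; 1; 0; 0; 0; 0; 0; 0; 0; 0; 0; 0; 0], [:: 3; 2; 1; 2; 3; 1; 1; 4; 2; 0; 4; 1; 0; 0; 2]);
(3, [:: 0; 0; 0; 0; 0; 0; 0; 0; 0; 0; 0; 0; 0; 0; 0], [:: 3; 0; 2; 0; 1; 3; 1; 2; 3; 2; 2; 3; 1; 3; 0]);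
(14, [:: 0; 0; 0; 1; 0; 0; 0; 0; 0; 0; 0; 0; 0; 0; 0], [:: 3; 6; 3; 1; 1; 2; 3; 0; 2; 1; 1; 3; 0; 0; 0]);
(13, [:: 0; 0; 0; 0; 0; 0; 0; 0; 0; 0; 0; 0; 0; 0; 0], [:: 1; 3; 2; 1; 3; 3; 4; 0; 1; 0; 4; 2; 0; 0; 2]);
(1, [:: 0; 0; 0; 0; 0; 0; 0; 0; 0; 0; 0; 1; 0; 0; 0], [:: 0; 0; 3; 1; 2; 1; 2; 2; 3; 4; 4; 0; 0; 2; 2]);
(0, [:: 0; 0; 0; 0; 0; 0; 0; 0; 0; 0; 0; 1; 0; 0; 0], [:: 0; 1; 5; 2; 0; 1; 0; 3; 2; 1; 3; 1; 3; 1; 3]);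
(2, [:: 0; 0; 0; 0; 0; 0; 0; 0; 0; 0; 0; 0; 0; 0; 1], [:: 3; 0; 0; 2; 1; 1; 5; 1; 2; 2; 2; 2; 3; 2; 0]);
(8, [:: 0; 0; 0; 0; 0; 0; 0; 0; 0; 0; 0; 1; 0; 0; 0], [:: 1; 1; 4; 1; 2; 0; 3; 4; 0; 2; 2; 0; 3; 3; 0]);
(5, [:: 0; 0; 0; 0; 0; 0; 0; 0; 0; 0; 0; 0; 0; 0; 0], [:: 6; 3; 1; 4; 1; 0; 2; 0; 1; 0; 2; 1; 2; 1; 2]);
(11, [:: 0; 0; 0; 0; 0; 0; 0; 0; 0; 0; 0; 0; 0; 1; 0], [:: 2; 2; 1; 4; 1; 1; 2; 4; 1; 0; 2; 0; 4; 2; 0]);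
(10, [:: 0; 0; 0; 0; 0; 0; 0; 0; 0; 0; 0; 0; 0; 0; 0], [:: 1; 2; 5; 2; 0; 4; 1; 1; 1; 1; 0; 2; 3; 0; 3]);
(4, [:: 0; 0; 0; 0; 0; 0; 0; 0; 0; 0; 0; 0; 1; 0; 0], [:: 2; 0; 1; 3; 0; 1; 3; 1; 3; 5; 1; 1; 0; 3; 2]);
(11, [:: 0; 0; 0; 0; 0; 0; 0; 0; 0; 0; 0; 0; 0; 0; 0], [:: 2; 3; 0; 1; 0; 3; 2; 1; 3; 1; 4; 0; 3; 0; 3]);
(13, [:: 0; 0; 0; 0; 0; 0; 0; 0; 0; 0; 0; 0; 0; 0; 0], [:: 1; 4; 1; 3; 2; 0; 1; 1; 3; 3; 0; 1; 3; 0; 3]);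
(13, [:: 0; 0; 0; 0; 1; 0; 0; 0; 0; 0; 0; 0; 0; 0; 0], [:: 2; 1; 2; 4; 1; 0; 0; 2; 2; 2; 3; 3; 1; 0; 3]);
(14, [:: 0; 0; 0; 0; 0; 0; 0; 0; 1; 0; 0; 0; 0; 0; 0], [:: 0; 2; 0; 4; 2; 2; 3; 4; 1; 1; 1; 1; 3; 2; 0]);
(11, [:: 0; 0; 0; 0; 0; 0; 0; 0; 0; 0; 0; 0; 0; 0; 0], [:: 2; 2; 4; 1; 3; 3; 4; 3; 1; 1; 0; 0; 1; 1; 0]);
(6, [:: 0; 0; 0; 0; 0; 0; 0; 0; 0; 0; 0; 1; 0; 0; 0], [:: 1; 5; 3; 0; 1; 1; 0; 2; 0; 2; 4; 2; 1; 1; 3]);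
(9, [:: 0; 0; 0; 0; 1; 0; 0; 0; 0; 0; 0; 0; 0; 0; 0], [:: 3; 2; 3; 2; 0; 1; 2; 3; 3; 0; 4; 1; 0; 0; 2]);
(6, [:: 0; 0; 0; 0; 1; 0; 0; 0; 0; 0; 0; 0; 0; 0; 0], [:: 3; 3; 2; 4; 2; 1; 0; 0; 2; 0; 2; 1; 2; 3; 1]);
(8, [:: 0; 0; 0; 0; 0; 0; 0; 0; 0; 0; 0; 0; 0; 0; 0], [:: 2; 3; 0; 0; 3; 0; 1; 3; 0; 4; 4; 1; 1; 2; 2]);
(3, [:: 0; 0; 0; 0; 0; 0; 0; 0; 0; 0; 0; 0; 0; 0; 0], [:: 0; 2; 3; 0; 1; 4; 5; 1; 1; 5; 0; 1; 1; 1; 1]);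
(12, [:: 0; 0; 0; 0; 0; 0; 0; 0; 0; 0; 0; 1; 0; 0; 0], [:: 4; 1; 2; 2; 3; 1; 1; 3; 3; 2; 1; 0; 0; 3; 0]);
(2, [:: 0; 0; 0; 0; 0; 0; 0; 0; 0; 0; 0; 0; 0; 0; 0], [:: 0; 5; 0; 2; 1; 3; 1; 0; 3; 0; 1; 3; 3; 3; 1]);
(3, [:: 0; 0; 0; 0; 0; 0; 0; 0; 0; 0; 0; 0; 0; 0; 0], [:: 3; 0; 2; 0; 1; 2; 3; 4; 1; 1; 2; 0; 4; 2; 1]);
(14, [:: 0; 0; 0; 0; 0; 0; 0; 0; 0; 0; 0; 0; 0; 0; 0], [:: 1; 2; 3; 0; 1; 0; 5; 1; 2; 3; 2; 3; 2; 1; 0]);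
(6, [:: 0; 0; 0; 0; 0; 0; 0; 0; 0; 0; 0; 1; 0; 0; 0], [:: 1; 1; 4; 1; 3; 3; 0; 1; 3; 5; 2; 1; 0; 0; 1]);
(11, [:: 0; 0; 0; 0; 0; 0; 0; 0; 0; 0; 0; 0; 0; 0; 1], [:: 2; 0; 3; 4; 2; 3; 1; 1; 1; 1; 0; 0; 3; 2; 3]);
(2, [:: 0; 0; 0; 0; 0; 0; 0; 0; 0; 0; 1; 0; 0; 0; 0], [:: 2; 5; 0; 1; 1; 2; 3; 0; 0; 4; 0; 1; 3; 3; 1]);
(9, [:: 0; 0; 0; 0; 0; 0; 0; 1; 0; 0; 0; 0; 0; 0; 0], [:: 0; 4; 2; 0; 1; 1; 1; 1; 3; 0; 4; 2; 4; 1; 2]);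
(8, [:: 0; 0; 1; 0; 0; 0; 0; 0; 0; 0; 0; 0; 0; 0; 0], [:: 2; 6; 0; 2; 2; 1; 0; 3; 0; 4; 1; 3; 1; 1; 0]);
(11, [:: 0; 0; 0; 0; 0; 0; 0; 0; 0; 0; 0; 0; 1; 0; 0], [:: 3; 2; 5; 3; 1; 2; 0; 2; 0; 3; 0; 0; 1; 1; 3]);
(3, [:: 0; 0; 0; 0; 0; 0; 0; 0; 0; 0; 0; 0; 0; 0; 0], [:: 1; 0; 4; 0; 3; 4; 2; 2; 0; 0; 1; 1; 3; 2; 3]);
(11, [:: 0; 0; 0; 0; 0; 0; 0; 0; 0; 0; 0; 0; 0; 0; 0], [:: 2; 3; 1; 0; 2; 1; 5; 0; 1; 5; 1; 0; 2; 2; 1]);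
(4, [:: 0; 0; 0; 0; 0; 0; 0; 0; 0; 0; 1; 0; 0; 1; 0], [:: 0; 2; 1; 4; 0; 3; 3; 0; 2; 2; 0; 2; 1; 3; 3]);
(4, [:: 0; 0; 0; 0; 0; 0; 0; 0; 0; 0; 0; 0; 0; 0; 0], [:: 3; 2; 0; 1; 0; 6; 1; 3; 0; 1; 3; 1; 0; 3; 2]);
(10, [:: 0; 0; 0; 0; 0; 0; 0; 0; 1; 0; 0; 0; 0; 0; 0], [:: 1; 0; 2; 1; 3; 2; 4; 4; 1; 0; 0; 2; 1; 2; 3]);
(6, [:: 0; 0; 0; 0; 0; 0; 0; 0; 0; 0; 0; 0; 0; 0; 1], [:: 4; 2; 2; 0; 2; 2; 0; 0; 1; 4; 2; 2; 2; 0; 3]);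
(4, [:: 0; 0; 0; 0; 0; 0; 0; 0; 0; 0; 1; 0; 0; 0; 0], [:: 0; 3; 1; 2; 0; 1; 4; 3; 0; 3; 1; 2; 1; 3; 2]);
(7, [:: 0; 0; 0; 0; 0; 0; 0; 0; 0; 0; 1; 0; 0; 0; 0], [:: 3; 1; 1; 3; 3; 0; 3; 0; 2; 2; 1; 3; 0; 3; 1]);
(4, [:: 0; 0; 0; 0; 0; 0; 0; 0; 0; 0; 0; 0; 0; 1; 0], [:: 2; 3; 0; 1; 0; 1; 3; 4; 2; 5; 1; 1; 2; 1; 0]);
(14, [:: 0; 0; 0; 0; 0; 0; 0; 0; 0; 0; 0; 0; 0; 0; 0], [:: 0; 6; 1; 2; 2; 6; 1; 2; 1; 2; 1; 1; 1; 0; 0]);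
(4, [:: 0; 0; 0; 0; 0; 0; 0; 0; 0; 0; 0; 0; 0; 0; 1], [:: 1; 3; 2; 0; 0; 1; 5; 2; 0; 2; 3; 2; 3; 1; 1]);
(14, [:: 0; 0; 0; 0; 0; 0; 0; 0; 1; 0; 0; 0; 0; 0; 0], [:: 2; 2; 1; 3; 1; 6; 1; 2; 2; 1; 2; 0; 0; 3; 0]);
(13, [:: 0; 0; 0; 0; 0; 0; 0; 0; 0; 0; 0; 0; 0; 0; 1], [:: 3; 1; 1; 2; 0; 2; 4; 4; 0; 4; 0; 2; 1; 0; 2]);
(13, [:: 0; 0; 0; 0; 0; 0; 0; 0; 1; 0; 0; 0; 0; 0; 0], [:: 3; 3; 3; 3; 3; 1; 2; 2; 1; 1; 0; 2; 0; 0; 2]);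
(11, [:: 0; 0; 0; 0; 0; 0; 0; 0; 1; 0; 0; 0; 0; 0; 0], [:: 2; 0; 0; 2; 3; 3; 4; 1; 3; 1; 1; 0; 2; 1; 3]);
(10, [:: 0; 0; 0; 0; 0; 0; 0; 0; 0; 0; 0; 0; 0; 0; 0], [:: 3; 1; 2; 4; 1; 4; 0; 0; 1; 1; 0; 1; 2; 3; 3]);
(7, [:: 0; 0; 0; 0; 0; 0; 0; 0; 0; 0; 0; 0; 0; 0; 0], [:: 0; 0; 5; 3; 1; 2; 0; 0; 2; 2; 3; 2; 4; 1; 1]);
(0, [:: 0; 0; 0; 0; 0; 0; 0; 1; 0; 0; 0; 0; 0; 0; 0], [:: 0; 0; 4; 1; 3; 2; 5; 0; 2; 0; 1; 2; 1; 2; 3]);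
(6, [:: 0; 0; 0; 0; 0; 0; 0; 0; 0; 0; 0; 0; 0; 0; 1], [:: 2; 2; 1; 3; 0; 3; 0; 3; 2; 2; 1; 3; 4; 0; 0]);
(3, [:: 0; 0; 0; 0; 0; 0; 0; 0; 0; 0; 0; 0; 0; 1; 0], [:: 0; 2; 3; 0; 1; 3; 1; 1; 2; 5; 3; 0; 2; 2; 1]);
(3, [:: 0; 0; 0; 0; 0; 0; 0; 0; 0; 0; 0; 0; 0; 0; 1], [:: 3; 1; 2; 0; 0; 3; 3; 0; 3; 1; 2; 1; 1; 3; 3]);
(7, [:: 0; 0; 0; 0; 1; 0; 0; 0; 0; 0; 0; 0; 0; 0; 0], [:: 1; 2; 2; 3; 3; 5; 1; 0; 0; 2; 0; 3; 0; 1; 3]);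
(3, [:: 0; 0; 0; 0; 0; 0; 0; 0; 0; 0; 0; 1; 0; 0; 0], [:: 1; 2; 4; 0; 0; 0; 5; 3; 1; 3; 1; 1; 1; 2; 2]);
(0, [:: 0; 0; 0; 0; 0; 0; 1; 0; 0; 0; 0; 0; 0; 0; 0], [:: 0; 2; 1; 3; 0; 3; 0; 3; 3; 3; 1; 1; 1; 2; 3]);
(14, [:: 0; 0; 0; 0; 0; 0; 0; 0; 1; 0; 0; 0; 0; 0; 0], [:: 3; 2; 3; 1; 0; 1; 1; 3; 2; 2; 4; 2; 0; 2; 0]);
(1, [:: 0; 0; 0; 0; 0; 0; 0; 0; 0; 0; 0; 0; 0; 0; 0], [:: 1; 0; 0; 4; 2; 1; 1; 4; 1; 4; 1; 1; 0; 3; 3]);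
(14, [:: 0; 0; 0; 1; 0; 0; 0; 0; 0; 0; 0; 0; 0; 0; 0], [:: 2; 1; 2; 0; 3; 1; 5; 1; 2; 0; 1; 3; 3; 2; 0]);
(2, [:: 0; 0; 0; 0; 0; 0; 0; 0; 1; 0; 0; 0; 0; 0; 0], [:: 1; 0; 0; 3; 2; 2; 2; 2; 3; 3; 3; 3; 1; 0; 1]);
(9, [:: 0; 0; 0; 0; 0; 0; 0; 0; 0; 0; 0; 0; 0; 0; 0], [:: 5; 2; 1; 3; 3; 2; 0; 4; 1; 0; 2; 1; 1; 1; 0]);
(13, [:: 0; 0; 0; 0; 0; 0; 0; 0; 0; 0; 0; 0; 0; 0; 0], [:: 3; 1; 1; 0; 2; 3; 0; 1; 2; 2; 2; 3; 4; 0; 2]);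
(0, [:: 0; 0; 0; 0; 0; 0; 0; 0; 0; 0; 1; 0; 0; 0; 0], [:: 0; 2; 3; 4; 1; 6; 2; 2; 1; 2; 0; 1; 1; 1; 0]);
(3, [:: 0; 0; 0; 0; 0; 0; 0; 0; 0; 0; 0; 0; 0; 0; 0], [:: 5; 1; 5; 0; 0; 0; 1; 3; 2; 2; 0; 0; 4; 2; 1]);
(6, [:: 0; 0; 0; 0; 0; 0; 0; 0; 0; 0; 0; 0; 0; 0; 0], [:: 6; 4; 2; 0; 1; 2; 0; 1; 0; 1; 4; 0; 1; 2; 2]);
(3, [:: 0; 0; 0; 0; 0; 0; 0; 0; 0; 0; 0; 0; 0; 1; 0], [:: 3; 5; 3; 0; 3; 1; 3; 0; 0; 0; 1; 1; 4; 1; 1]);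
(2, [:: 0; 0; 0; 0; 0; 0; 0; 0; 0; 0; 0; 0; 0; 1; 0], [:: 0; 2; 0; 2; 3; 0; 3; 1; 1; 2; 2; 3; 4; 2; 1]);
(2, [:: 0; 0; 0; 0; 0; 0; 0; 0; 0; 0; 0; 0; 0; 1; 0], [:: 3; 2; 0; 0; 1; 1; 1; 4; 2; 0; 3; 1; 2; 3; 3]);
(9, [:: 0; 0; 0; 0; 0; 0; 0; 0; 0; 0; 0; 0; 0; 0; 0], [:: 4; 4; 0; 3; 1; 2; 4; 1; 0; 0; 0; 3; 1; 3; 0]);
(12, [:: 0; 0; 0; 0; 0; 0; 0; 1; 1; 0; 0; 0; 0; 0; 0], [:: 4; 1; 4; 3; 1; 2; 4; 4; 0; 1; 0; 1; 0; 0; 1]);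
(4, [:: 0; 0; 0; 0; 0; 0; 0; 0; 1; 0; 0; 0; 0; 0; 0], [:: 0; 1; 4; 2; 0; 4; 4; 2; 0; 0; 1; 3; 1; 2; 2]);
(5, [:: 0; 0; 0; 0; 0; 0; 0; 0; 0; 0; 0; 1; 0; 0; 0], [:: 4; 1; 3; 1; 1; 0; 0; 1; 2; 3; 2; 3; 2; 0; 3]);
(8, [:: 0; 0; 0; 0; 0; 0; 0; 0; 0; 0; 0; 0; 0; 1; 0], [:: 1; 2; 0; 1; 3; 2; 3; 0; 0; 1; 4; 2; 4; 1; 2]);
(9, [:: 0; 0; 0; 0; 1; 0; 0; 0; 0; 0; 0; 0; 0; 0; 0], [:: 5; 2; 1; 4; 2; 2; 2; 1; 1; 0; 4; 0; 0; 1; 1]);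
(8, [:: 0; 0; 0; 0; 0; 0; 0; 0; 0; 0; 0; 0; 1; 0; 0], [:: 3; 1; 2; 0; 0; 3; 2; 4; 0; 1; 3; 1; 0; 3; 3]);
(4, [:: 0; 0; 0; 0; 0; 0; 0; 1; 0; 0; 0; 0; 0; 0; 0], [:: 0; 5; 2; 4; 0; 3; 1; 0; 2; 2; 2; 2; 0; 2; 1]);
(3, [:: 0; 0; 0; 0; 0; 0; 0; 0; 0; 0; 0; 0; 0; 1; 0], [:: 3; 2; 1; 0; 0; 3; 4; 1; 0; 2; 1; 1; 2; 3; 3]);
(7, [:: 0; 0; 0; 1; 0; 0; 0; 0; 0; 0; 0; 0; 0; 0; 0], [:: 2; 3; 4; 0; 3; 0; 4; 0; 3; 1; 1; 0; 1; 1; 3]);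
(0, [:: 0; 0; 0; 0; 0; 0; 0; 0; 0; 0; 0; 0; 0; 1; 0], [:: 0; 2; 2; 1; 3; 3; 2; 2; 3; 0; 1; 3; 1; 0; 3]);
(4, [:: 0; 0; 0; 0; 0; 0; 0; 0; 0; 0; 0; 1; 0; 0; 0], [:: 2; 0; 1; 3; 0; 2; 4; 2; 3; 1; 1; 2; 4; 1; 0]);
(2, [:: 0; 0; 0; 0; 0; 0; 0; 0; 0; 0; 0; 0; 0; 0; 0], [:: 1; 3; 0; 0; 3; 5; 1; 1; 0; 1; 1; 3; 4; 2; 1]);
(14, [:: 0; 0; 0; 0; 0; 0; 0; 0; 0; 0; 1; 0; 0; 0; 0], [:: 2; 3; 0; 1; 2; 0; 1; 2; 3; 5; 1; 2; 1; 3; 0]);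
(3, [:: 0; 0; 0; 0; 0; 0; 0; 1; 0; 0; 0; 0; 0; 0; 0], [:: 3; 2; 1; 0; 0; 3; 5; 1; 2; 1; 0; 3; 3; 1; 1]);
(1, [:: 0; 0; 0; 0; 0; 0; 0; 0; 0; 0; 0; 0; 1; 0; 0], [:: 2; 0; 1; 4; 1; 4; 0; 0; 1; 1; 1; 3; 3; 2; 3]);
(11, [:: 0; 0; 0; 0; 0; 0; 0; 0; 0; 0; 0; 0; 0; 0; 1], [:: 7; 0; 0; 1; 2; 2; 2; 2; 0; 2; 2; 0; 2; 3; 1]);
(9, [:: 0; 0; 0; 0; 0; 0; 0; 0; 0; 0; 0; 0; 0; 1; 0], [:: 2; 1; 1; 4; 2; 6; 2; 2; 1; 0; 1; 0; 3; 0; 1]);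
(4, [:: 0; 0; 0; 0; 0; 0; 0; 0; 0; 0; 0; 1; 0; 0; 0], [:: 0; 2; 3; 4; 0; 1; 2; 1; 0; 4; 2; 1; 0; 3; 3]);
(3, [:: 0; 0; 0; 0; 0; 0; 0; 0; 0; 0; 0; 1; 0; 0; 0], [:: 2; 0; 1; 0; 3; 5; 2; 1; 1; 1; 4; 0; 4; 1; 1]);
(11, [:: 0; 0; 0; 0; 0; 0; 0; 0; 0; 0; 0; 0; 0; 0; 0], [:: 5; 6; 1; 1; 1; 1; 1; 3; 0; 3; 0; 0; 1; 0; 3]);
(9, [:: 0; 0; 0; 0; 0; 0; 0; 0; 0; 0; 0; 0; 0; 0; 0], [:: 0; 4; 5; 1; 2; 1; 1; 3; 0; 0; 1; 1; 4; 1; 2]);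
(8, [:: 0; 0; 0; 0; 0; 0; 0; 0; 0; 0; 0; 1; 0; 0; 0], [:: 3; 0; 4; 1; 1; 0; 1; 2; 0; 5; 3; 1; 2; 1; 2]);
(9, [:: 0; 0; 0; 0; 1; 0; 0; 0; 0; 0; 0; 0; 0; 0; 0], [:: 1; 4; 1; 3; 0; 4; 1; 1; 3; 0; 1; 1; 4; 2; 0]);
(1, [:: 0; 0; 0; 0; 0; 0; 0; 0; 0; 0; 0; 0; 0; 0; 1], [:: 1; 0; 2; 0; 3; 2; 1; 4; 1; 3; 4; 1; 2; 0; 2]);
(2, [:: 0; 0; 0; 0; 0; 0; 0; 0; 1; 0; 0; 0; 0; 0; 1], [:: 3; 2; 0; 1; 0; 5; 3; 1; 3; 1; 2; 2; 2; 1; 0]);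
(6, [:: 0; 0; 0; 0; 1; 0; 0; 0; 0; 0; 0; 0; 0; 0; 0], [:: 2; 1; 5; 1; 2; 2; 0; 1; 3; 1; 0; 0; 4; 2; 2]);
(1, [:: 0; 0; 0; 0; 0; 0; 0; 0; 0; 0; 0; 1; 0; 0; 0], [:: 0; 0; 1; 3; 2; 0; 3; 1; 2; 2; 2; 3; 1; 3; 3]);
(12, [:: 0; 0; 0; 0; 0; 0; 0; 0; 0; 0; 0; 1; 0; 0; 0], [:: 0; 2; 1; 3; 0; 2; 2; 4; 2; 3; 3; 2; 0; 1; 1]);
(0, [:: 0; 0; 0; 0; 0; 0; 0; 0; 0; 0; 1; 0; 0; 0; 0], [:: 0; 3; 0; 1; 2; 0; 2; 4; 2; 1; 3; 2; 2; 1; 3]);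
(14, [:: 0; 0; 0; 0; 0; 0; 0; 0; 0; 0; 0; 0; 0; 1; 0], [:: 2; 2; 4; 4; 1; 1; 2; 0; 1; 0; 4; 1; 4; 0; 0]);
(14, [:: 0; 0; 0; 0; 0; 0; 0; 0; 0; 0; 0; 0; 0; 1; 0], [:: 7; 5; 1; 1; 0; 0; 1; 2; 3; 2; 3; 0; 1; 0; 0]);
(5, [:: 0; 0; 0; 0; 1; 0; 0; 0; 0; 0; 0; 0; 0; 0; 0], [:: 7; 2; 2; 1; 1; 0; 1; 3; 0; 2; 1; 3; 0; 1; 2]);
(5, [:: 0; 0; 0; 0; 1; 0; 0; 0; 0; 0; 0; 0; 0; 0; 0], [:: 2; 4; 5; 1; 1; 0; 3; 1; 0; 0; 1; 1; 1; 3; 3]);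
(0, [:: 0; 0; 0; 0; 0; 0; 0; 0; 0; 0; 0; 0; 0; 0; 0], [:: 0; 6; 2; 0; 1; 5; 0; 1; 3; 0; 0; 3; 1; 2; 2]);
(0, [:: 0; 0; 0; 0; 0; 0; 0; 0; 0; 0; 1; 0; 0; 0; 0], [:: 0; 3; 2; 0; 1; 4; 1; 0; 3; 1; 2; 3; 3; 3; 0]);
(8, [:: 0; 0; 0; 0; 0; 0; 0; 0; 0; 0; 0; 0; 0; 0; 0], [:: 3; 6; 4; 2; 0; 2; 1; 0; 0; 1; 2; 1; 2; 2; 0]);
(7, [:: 0; 0; 0; 0; 0; 0; 0; 0; 0; 0; 0; 0; 0; 0; 0], [:: 7; 5; 1; 1; 0; 1; 0; 0; 3; 2; 0; 1; 2; 1; 2]);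
(10, [:: 0; 0; 0; 0; 0; 0; 0; 0; 0; 0; 0; 0; 0; 0; 0], [:: 4; 3; 0; 4; 2; 1; 1; 2; 0; 5; 0; 2; 1; 0; 1]);
(4, [:: 0; 0; 0; 0; 0; 0; 0; 0; 0; 0; 0; 0; 0; 0; 0], [:: 3; 0; 1; 2; 0; 1; 1; 2; 3; 5; 3; 1; 2; 0; 2]);
(13, [:: 0; 0; 0; 0; 0; 0; 0; 0; 0; 0; 0; 1; 0; 0; 0], [:: 2; 3; 3; 4; 2; 1; 0; 1; 2; 3; 1; 0; 4; 0; 0]);
(6, [:: 0; 0; 0; 0; 0; 0; 0; 0; 0; 0; 0; 0; 1; 0; 1], [:: 3; 3; 0; 1; 0; 3; 0; 0; 2; 4; 2; 1; 3; 3; 1]);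
(9, [:: 0; 0; 0; 0; 0; 0; 1; 0; 0; 0; 0; 0; 0; 1; 0], [:: 0; 2; 1; 0; 3; 3; 5; 2; 2; 0; 3; 1; 2; 1; 1]);
(13, [:: 0; 0; 0; 0; 0; 0; 0; 0; 1; 0; 0; 0; 0; 0; 0], [:: 3; 0; 1; 2; 0; 2; 4; 4; 1; 2; 1; 1; 2; 0; 3]);
(7, [:: 0; 0; 0; 0; 0; 0; 0; 0; 0; 1; 0; 0; 0; 0; 0], [:: 5; 0; 1; 2; 2; 1; 0; 0; 2; 2; 2; 2; 3; 1; 3]);
(6, [:: 0; 0; 0; 0; 1; 0; 0; 0; 0; 0; 0; 0; 0; 0; 0], [:: 1; 2; 1; 3; 3; 1; 0; 2; 0; 2; 3; 0; 3; 3; 2]);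
(12, [:: 0; 0; 0; 0; 0; 0; 1; 0; 0; 0; 0; 0; 0; 0; 0], [:: 1; 3; 2; 1; 0; 6; 0; 1; 2; 4; 2; 2; 0; 2; 0]);
(5, [:: 0; 0; 1; 0; 0; 0; 0; 0; 0; 0; 0; 0; 0; 0; 0], [:: 1; 1; 0; 4; 2; 0; 5; 2; 1; 2; 1; 2; 0; 2; 3]);
(3, [:: 0; 0; 0; 0; 0; 0; 0; 0; 0; 0; 0; 1; 0; 0; 0], [:: 0; 4; 5; 0; 1; 3; 2; 1; 1; 1; 1; 2; 2; 3; 0]);
(6, [:: 0; 0; 0; 0; 0; 0; 0; 0; 0; 0; 0; 0; 0; 0; 1], [:: 3; 1; 2; 0; 1; 3; 0; 2; 1; 4; 0; 2; 4; 2; 1]);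
(7, [:: 0; 0; 0; 0; 0; 0; 0; 0; 0; 0; 0; 0; 0; 0; 0], [:: 4; 1; 0; 0; 2; 6; 2; 0; 2; 4; 3; 1; 0; 0; 1]);
(13, [:: 0; 0; 0; 0; 0; 0; 0; 1; 0; 0; 0; 0; 0; 0; 0], [:: 2; 0; 3; 1; 0; 2; 5; 1; 2; 3; 2; 3; 1; 0; 1]);
(3, [:: 0; 0; 0; 0; 0; 0; 0; 0; 0; 0; 0; 1; 0; 0; 0], [:: 2; 1; 3; 0; 0; 4; 1; 2; 3; 1; 3; 3; 0; 1; 2]);
(14, [:: 0; 0; 0; 0; 0; 0; 0; 0; 0; 0; 0; 0; 0; 0; 0], [:: 0; 6; 0; 3; 1; 2; 3; 4; 0; 1; 1; 1; 4; 0; 0]);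
(9, [:: 0; 0; 1; 0; 0; 0; 0; 0; 0; 0; 0; 0; 0; 0; 0], [:: 7; 2; 1; 2; 1; 1; 0; 1; 3; 0; 1; 3; 3; 1; 0]);
(9, [:: 0; 0; 0; 0; 1; 0; 0; 0; 0; 0; 0; 0; 0; 0; 0], [:: 4; 1; 2; 1; 3; 2; 4; 2; 3; 0; 0; 2; 2; 0; 0]);
(0, [:: 0; 0; 0; 0; 0; 0; 0; 0; 1; 0; 0; 0; 0; 0; 0], [:: 0; 1; 3; 2; 1; 2; 2; 3; 3; 4; 4; 0; 0; 0; 1]);
(5, [:: 0; 0; 0; 0; 0; 0; 0; 0; 0; 0; 0; 1; 0; 0; 0], [:: 0; 4; 1; 3; 1; 0; 1; 2; 2; 1; 4; 0; 2; 2; 3]);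
(9, [:: 0; 0; 0; 1; 0; 0; 0; 0; 0; 0; 0; 0; 0; 0; 0], [:: 3; 2; 4; 3; 1; 0; 2; 1; 3; 0; 1; 0; 2; 3; 1]);
(13, [:: 0; 0; 0; 0; 0; 0; 0; 0; 0; 0; 0; 1; 0; 0; 0], [:: 6; 1; 1; 1; 3; 0; 1; 4; 1; 1; 4; 1; 0; 0; 2]);
(4, [:: 0; 0; 0; 0; 0; 0; 0; 0; 0; 0; 0; 0; 0; 0; 0], [:: 5; 1; 0; 3; 0; 0; 3; 1; 1; 5; 3; 0; 0; 2; 2]);
(13, [:: 0; 0; 0; 1; 0; 0; 0; 0; 0; 0; 0; 0; 0; 0; 0], [:: 1; 4; 1; 3; 2; 6; 1; 1; 2; 1; 0; 0; 2; 0; 2]);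
(11, [:: 0; 0; 0; 0; 0; 0; 0; 0; 1; 0; 0; 0; 0; 0; 1], [:: 3; 1; 0; 2; 0; 2; 2; 4; 0; 1; 3; 0; 2; 3; 3]);
(12, [:: 0; 0; 0; 0; 0; 0; 0; 1; 0; 0; 0; 1; 0; 0; 0], [:: 0; 1; 3; 0; 3; 1; 2; 3; 3; 2; 2; 0; 0; 3; 3]);
(1, [:: 0; 0; 0; 0; 0; 0; 0; 0; 0; 0; 0; 0; 0; 0; 1], [:: 2; 0; 4; 1; 0; 1; 1; 1; 3; 4; 2; 3; 2; 0; 2]);
(11, [:: 0; 0; 0; 0; 0; 0; 0; 0; 0; 0; 0; 0; 0; 1; 0], [:: 1; 5; 1; 2; 0; 2; 1; 0; 3; 1; 2; 0; 2; 3; 3]);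
(2, [:: 0; 0; 0; 0; 0; 0; 0; 0; 1; 0; 0; 0; 0; 0; 0], [:: 4; 2; 0; 1; 0; 1; 1; 3; 0; 1; 2; 3; 3; 3; 2]);
(11, [:: 0; 0; 0; 0; 1; 0; 0; 0; 0; 0; 0; 0; 0; 0; 0], [:: 1; 6; 2; 2; 0; 3; 1; 3; 3; 1; 0; 0; 1; 0; 3]);
(14, [:: 0; 0; 0; 0; 0; 0; 0; 0; 0; 0; 0; 0; 0; 0; 0], [:: 0; 0; 1; 2; 3; 3; 0; 1; 3; 5; 1; 2; 3; 2; 0]);
(10, [:: 0; 0; 0; 0; 0; 0; 0; 0; 0; 0; 0; 0; 0; 0; 1], [:: 4; 0; 1; 3; 0; 4; 4; 1; 3; 1; 0; 1; 1; 1; 2]);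
(7, [:: 0; 0; 0; 0; 0; 0; 0; 0; 0; 0; 0; 0; 0; 0; 0], [:: 1; 6; 0; 1; 2; 3; 0; 0; 1; 3; 2; 1; 1; 2; 3]);
(8, [:: 0; 0; 0; 0; 0; 0; 0; 0; 0; 0; 1; 0; 0; 0; 0], [:: 2; 1; 4; 0; 0; 4; 1; 1; 0; 3; 3; 3; 0; 2; 2]);
(2, [:: 0; 0; 0; 0; 0; 0; 0; 0; 0; 1; 0; 0; 0; 0; 0], [:: 3; 1; 0; 2; 0; 2; 5; 1; 0; 3; 1; 3; 2; 2; 1]);
(9, [:: 0; 0; 0; 0; 0; 0; 1; 0; 0; 0; 0; 0; 0; 0; 0], [:: 7; 1; 4; 1; 1; 1; 0; 2; 1; 0; 4; 1; 2; 1; 0]);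
(13, [:: 0; 0; 0; 0; 0; 0; 0; 0; 0; 0; 0; 0; 0; 0; 1], [:: 2; 1; 2; 4; 1; 6; 2; 0; 1; 4; 0; 1; 2; 0; 0]);
(5, [:: 0; 0; 0; 0; 0; 0; 0; 0; 0; 0; 0; 0; 0; 0; 0], [:: 1; 0; 2; 3; 3; 0; 0; 4; 1; 2; 4; 0; 4; 1; 1]);
(2, [:: 0; 0; 0; 0; 0; 0; 0; 0; 0; 0; 0; 0; 1; 1; 0], [:: 3; 2; 0; 1; 0; 3; 2; 1; 2; 5; 1; 0; 3; 2; 1]);
(3, [:: 0; 0; 0; 0; 0; 0; 0; 0; 0; 0; 0; 0; 0; 1; 0], [:: 0; 1; 2; 0; 3; 1; 2; 4; 1; 2; 2; 2; 4; 2; 0]);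
(1, [:: 0; 0; 0; 0; 0; 1; 0; 0; 0; 0; 0; 0; 0; 0; 0], [:: 2; 0; 1; 3; 0; 0; 2; 2; 3; 1; 1; 3; 4; 2; 2]);
(4, [:: 0; 0; 0; 0; 0; 0; 0; 0; 0; 0; 0; 0; 0; 0; 0], [:: 0; 3; 5; 1; 0; 1; 0; 2; 2; 4; 3; 0; 0; 3; 2]);
(9, [:: 0; 0; 0; 0; 0; 0; 0; 1; 0; 0; 0; 0; 0; 0; 0], [:: 1; 2; 2; 3; 3; 4; 2; 4; 1; 0; 1; 1; 2; 0; 0]);
(1, [:: 0; 0; 0; 0; 0; 0; 0; 0; 0; 0; 0; 0; 0; 0; 0], [:: 1; 0; 4; 0; 2; 3; 1; 2; 2; 3; 4; 2; 1; 1; 0]);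
(3, [:: 0; 0; 0; 0; 0; 0; 0; 0; 0; 0; 1; 0; 0; 0; 0], [:: 3; 2; 1; 0; 0; 0; 5; 3; 1; 1; 1; 2; 2; 2; 3]);
(12, [:: 0; 0; 0; 0; 1; 0; 0; 0; 0; 0; 0; 0; 0; 0; 0], [:: 1; 3; 2; 3; 2; 2; 4; 0; 3; 5; 1; 0; 0; 0; 0]);
(5, [:: 0; 1; 0; 0; 0; 0; 0; 0; 0; 0; 0; 0; 0; 0; 0], [:: 3; 1; 1; 3; 2; 0; 2; 4; 2; 1; 4; 0; 0; 1; 2]);
(11, [:: 0; 0; 0; 0; 1; 0; 0; 0; 1; 0; 0; 0; 0; 0; 0], [:: 2; 5; 3; 4; 0; 1; 3; 1; 1; 1; 0; 0; 4; 1; 0]);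
(3, [:: 0; 0; 0; 0; 0; 0; 1; 0; 0; 0; 0; 0; 0; 0; 0], [:: 1; 3; 0; 0; 2; 3; 2; 3; 3; 1; 2; 1; 4; 1; 0]);
(3, [:: 0; 0; 0; 0; 0; 0; 0; 0; 0; 0; 0; 1; 0; 0; 0], [:: 0; 2; 1; 0; 3; 2; 1; 3; 0; 5; 1; 2; 2; 3; 1]);
(11, [:: 0; 0; 0; 0; 0; 0; 0; 0; 0; 0; 0; 0; 1; 0; 0], [:: 2; 2; 4; 1; 3; 1; 4; 0; 1; 1; 0; 0; 3; 3; 1]);
(6, [:: 0; 0; 0; 1; 0; 0; 0; 0; 0; 0; 0; 0; 0; 0; 0], [:: 2; 2; 3; 0; 3; 1; 0; 0; 3; 2; 1; 3; 4; 0; 2]);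
(4, [:: 0; 0; 0; 0; 0; 0; 0; 0; 0; 0; 0; 0; 0; 0; 0], [:: 2; 3; 3; 0; 0; 4; 4; 0; 0; 2; 2; 0; 4; 2; 0]);
(9, [:: 0; 0; 0; 0; 0; 0; 0; 0; 0; 0; 0; 0; 0; 1; 0], [:: 3; 1; 5; 1; 2; 0; 4; 1; 0; 0; 1; 2; 1; 3; 2]);
(12, [:: 0; 0; 0; 0; 0; 0; 0; 0; 1; 0; 0; 0; 0; 0; 0], [:: 3; 1; 1; 4; 1; 4; 2; 1; 0; 4; 0; 3; 0; 0; 2]);
(3, [:: 0; 0; 0; 0; 0; 0; 0; 0; 0; 0; 1; 0; 0; 1; 0], [:: 1; 3; 2; 0; 3; 0; 4; 1; 0; 2; 0; 3; 1; 3; 3]);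
(0, [:: 0; 0; 0; 0; 0; 0; 0; 0; 0; 0; 0; 0; 0; 2; 0], [:: 0; 5; 3; 1; 0; 3; 5; 3; 1; 0; 2; 0; 2; 0; 1]);
(14, [:: 0; 0; 0; 0; 0; 0; 0; 0; 1; 0; 0; 0; 0; 0; 0], [:: 1; 3; 2; 4; 0; 2; 1; 4; 0; 0; 1; 2; 4; 2; 0]);
(12, [:: 0; 0; 0; 0; 0; 0; 0; 0; 0; 0; 1; 1; 0; 0; 0], [:: 3; 1; 2; 4; 0; 1; 2; 3; 1; 2; 3; 3; 0; 1; 0]);
(14, [:: 0; 0; 0; 0; 1; 0; 0; 0; 0; 0; 0; 0; 0; 0; 0], [:: 2; 1; 3; 3; 1; 3; 0; 4; 1; 1; 4; 1; 0; 2; 0]);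
(6, [:: 0; 0; 0; 1; 0; 0; 0; 0; 0; 0; 0; 0; 0; 0; 0], [:: 1; 1; 3; 2; 1; 2; 0; 2; 3; 4; 0; 3; 0; 2; 2]);
(3, [:: 0; 0; 0; 0; 0; 0; 0; 0; 0; 1; 0; 0; 0; 0; 0], [:: 3; 0; 1; 0; 2; 2; 1; 4; 1; 3; 2; 2; 2; 0; 3]);
(12, [:: 0; 1; 0; 0; 0; 0; 0; 0; 0; 0; 0; 0; 0; 0; 0], [:: 7; 0; 2; 2; 2; 1; 1; 0; 2; 2; 4; 1; 0; 2; 0]);
(3, [:: 0; 0; 0; 0; 0; 0; 0; 0; 0; 0; 1; 0; 0; 0; 0], [:: 0; 2; 3; 0; 3; 3; 4; 0; 3; 2; 3; 1; 0; 1; 1]);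
(2, [:: 0; 0; 0; 0; 0; 0; 0; 0; 0; 0; 0; 0; 0; 1; 0], [:: 2; 1; 0; 3; 0; 4; 1; 2; 3; 3; 2; 1; 1; 0; 3]);
(5, [:: 0; 0; 0; 1; 0; 0; 0; 0; 0; 0; 0; 0; 0; 0; 0], [:: 6; 1; 5; 1; 1; 0; 1; 2; 1; 2; 4; 1; 1; 0; 0]);
(8, [:: 0; 0; 0; 0; 0; 0; 0; 0; 0; 0; 0; 1; 0; 0; 0], [:: 1; 0; 2; 4; 1; 1; 0; 3; 0; 2; 2; 3; 3; 3; 1]);
(7, [:: 0; 0; 0; 0; 1; 0; 0; 0; 0; 0; 0; 0; 0; 0; 0], [:: 7; 2; 4; 1; 1; 2; 1; 0; 0; 3; 1; 1; 3; 0; 0]);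
(13, [:: 0; 0; 0; 0; 0; 1; 0; 0; 0; 0; 0; 0; 0; 0; 0], [:: 7; 2; 3; 0; 2; 0; 1; 2; 3; 2; 0; 0; 2; 0; 2]);
(6, [:: 0; 0; 0; 0; 0; 0; 0; 0; 0; 1; 0; 1; 0; 0; 0], [:: 1; 0; 3; 3; 0; 4; 0; 4; 2; 1; 4; 0; 1; 1; 2]);
(13, [:: 0; 0; 0; 0; 0; 0; 0; 0; 0; 0; 0; 1; 0; 0; 0], [:: 3; 0; 2; 0; 1; 4; 1; 4; 2; 2; 2; 2; 3; 0; 0]);
(4, [:: 0; 0; 0; 0; 0; 0; 0; 0; 0; 0; 0; 0; 0; 0; 0], [:: 2; 1; 4; 0; 0; 1; 4; 1; 1; 2; 3; 3; 0; 1; 3]);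
(5, [:: 0; 0; 0; 0; 0; 0; 0; 0; 0; 0; 0; 0; 0; 0; 0], [:: 2; 6; 0; 2; 1; 0; 3; 4; 1; 0; 0; 2; 3; 1; 1]);
(9, [:: 0; 0; 0; 0; 0; 0; 0; 1; 1; 0; 0; 0; 0; 0; 0], [:: 1; 0; 1; 3; 2; 3; 4; 4; 0; 0; 1; 2; 0; 2; 3]);
(2, [:: 0; 0; 0; 0; 0; 0; 0; 0; 0; 1; 0; 0; 0; 0; 0], [:: 3; 2; 0; 0; 1; 2; 2; 4; 2; 0; 2; 1; 1; 3; 3]);
(2, [:: 0; 0; 0; 0; 0; 0; 0; 0; 0; 0; 0; 0; 0; 0; 1], [:: 2; 2; 0; 4; 1; 5; 1; 1; 0; 2; 4; 0; 1; 0; 3]);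
(10, [:: 0; 0; 0; 1; 0; 0; 0; 0; 1; 0; 0; 0; 0; 0; 0], [:: 2; 2; 1; 2; 3; 5; 2; 4; 0; 1; 0; 0; 0; 3; 1]);
(6, [:: 0; 0; 0; 1; 0; 0; 0; 0; 0; 0; 0; 0; 0; 0; 0], [:: 1; 3; 3; 0; 1; 0; 0; 4; 1; 5; 2; 1; 3; 1; 1]);
(9, [:: 0; 0; 1; 0; 0; 0; 0; 0; 0; 0; 0; 0; 0; 0; 0], [:: 3; 1; 5; 2; 2; 1; 1; 2; 0; 0; 2; 2; 0; 3; 2]);
(3, [:: 0; 0; 0; 0; 0; 0; 0; 0; 0; 0; 0; 0; 0; 1; 0], [:: 4; 1; 0; 0; 3; 3; 4; 2; 3; 1; 2; 0; 3; 0; 0]);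
(11, [:: 0; 0; 0; 0; 0; 0; 0; 0; 0; 0; 0; 0; 0; 0; 1], [:: 3; 5; 1; 0; 1; 2; 5; 0; 2; 1; 0; 0; 4; 0; 2]);
(0, [:: 0; 0; 0; 0; 0; 0; 0; 1; 0; 0; 0; 0; 0; 0; 0], [:: 0; 1; 2; 3; 0; 2; 1; 2; 3; 3; 0; 1; 3; 3; 2]);
(0, [:: 0; 0; 0; 0; 0; 0; 0; 0; 1; 0; 0; 0; 0; 0; 0], [:: 0; 1; 5; 1; 2; 3; 1; 1; 3; 0; 0; 1; 2; 3; 3]);
(4, [:: 0; 0; 0; 0; 0; 0; 0; 0; 0; 0; 0; 0; 0; 0; 0], [:: 5; 5; 0; 1; 0; 0; 2; 2; 0; 1; 4; 2; 0; 1; 3]);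
(12, [:: 0; 0; 0; 0; 0; 0; 0; 0; 0; 0; 1; 0; 0; 0; 0], [:: 0; 3; 5; 1; 2; 1; 1; 1; 3; 2; 0; 2; 0; 2; 3]);
(12, [:: 0; 0; 0; 1; 0; 0; 0; 0; 0; 0; 0; 0; 0; 0; 0], [:: 1; 2; 4; 2; 3; 6; 0; 1; 1; 3; 1; 0; 0; 0; 2]);
(11, [:: 0; 0; 0; 0; 0; 0; 0; 0; 0; 0; 0; 0; 0; 0; 0], [:: 2; 1; 5; 0; 1; 3; 1; 0; 0; 5; 3; 0; 3; 1; 1]);
(5, [:: 0; 0; 1; 1; 1; 0; 0; 0; 0; 0; 0; 0; 0; 0; 0], [:: 3; 3; 0; 2; 3; 0; 4; 2; 1; 1; 4; 1; 2; 0; 0]);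
(8, [:: 0; 1; 0; 0; 0; 0; 0; 0; 0; 0; 0; 0; 0; 0; 0], [:: 1; 0; 4; 2; 2; 0; 2; 1; 0; 5; 1; 2; 1; 3; 2]);
(10, [:: 0; 0; 0; 0; 0; 0; 0; 0; 1; 0; 0; 0; 0; 0; 0], [:: 1; 4; 1; 4; 1; 2; 5; 3; 0; 1; 0; 0; 0; 1; 3]);
(9, [:: 0; 0; 0; 0; 0; 0; 0; 0; 0; 0; 0; 0; 0; 1; 0], [:: 2; 5; 2; 0; 2; 4; 1; 1; 3; 0; 4; 0; 1; 1; 0]);
(8, [:: 0; 0; 0; 0; 0; 0; 0; 0; 0; 0; 0; 1; 0; 1; 0], [:: 2; 4; 3; 4; 0; 0; 1; 2; 0; 3; 4; 1; 1; 1; 0]);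
(13, [:: 0; 0; 0; 0; 0; 0; 0; 0; 0; 0; 0; 0; 0; 0; 0], [:: 4; 1; 3; 2; 0; 2; 0; 4; 0; 0; 2; 2; 4; 0; 2]);
(14, [:: 0; 0; 0; 1; 1; 0; 0; 0; 0; 0; 0; 0; 0; 0; 0], [:: 3; 6; 2; 2; 2; 0; 1; 0; 2; 4; 0; 1; 2; 1; 0]);
(8, [:: 0; 0; 0; 0; 0; 0; 0; 0; 0; 1; 0; 1; 0; 0; 0], [:: 3; 2; 1; 0; 0; 3; 2; 1; 0; 3; 4; 1; 1; 2; 3]);
(7, [:: 0; 0; 0; 0; 0; 0; 0; 0; 0; 0; 0; 0; 1; 1; 0], [:: 2; 1; 1; 1; 3; 4; 4; 0; 0; 4; 2; 0; 1; 0; 3]);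
(2, [:: 0; 0; 0; 0; 0; 0; 1; 0; 0; 0; 0; 0; 0; 0; 0], [:: 2; 1; 0; 3; 0; 5; 1; 4; 1; 0; 1; 2; 1; 3; 2]);
(14, [:: 0; 0; 0; 0; 0; 0; 0; 0; 0; 0; 0; 0; 0; 0; 0], [:: 5; 1; 0; 1; 3; 4; 0; 4; 2; 1; 0; 2; 0; 3; 0]);
(8, [:: 0; 0; 0; 0; 0; 0; 0; 0; 0; 1; 0; 0; 0; 0; 0], [:: 1; 2; 4; 1; 3; 6; 1; 0; 0; 2; 1; 1; 2; 0; 2]);
(2, [:: 0; 0; 0; 0; 0; 0; 0; 0; 1; 0; 0; 0; 0; 0; 0], [:: 1; 0; 0; 4; 2; 3; 5; 3; 0; 2; 2; 2; 0; 1; 1]);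
(4, [:: 0; 0; 0; 0; 0; 0; 0; 0; 0; 0; 0; 1; 0; 0; 0], [:: 1; 0; 5; 2; 0; 0; 2; 1; 3; 2; 4; 0; 3; 2; 1]);
(10, [:: 0; 0; 0; 0; 0; 0; 0; 0; 0; 0; 0; 0; 1; 0; 0], [:: 1; 0; 3; 0; 2; 1; 1; 4; 2; 2; 0; 2; 3; 3; 2]);
(13, [:: 1; 0; 0; 0; 0; 0; 0; 0; 0; 0; 0; 0; 0; 0; 0], [:: 0; 2; 2; 2; 3; 2; 0; 4; 1; 1; 1; 2; 3; 0; 3]);
(1, [:: 0; 0; 0; 0; 0; 0; 0; 0; 1; 0; 0; 1; 0; 0; 0], [:: 0; 0; 2; 1; 3; 4; 2; 3; 3; 1; 2; 0; 1; 2; 2]);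
(14, [:: 0; 0; 0; 0; 0; 0; 0; 0; 1; 0; 0; 0; 0; 0; 0], [:: 1; 4; 5; 1; 1; 3; 2; 1; 0; 2; 1; 2; 0; 3; 0]);
(6, [:: 0; 0; 1; 0; 0; 0; 0; 0; 0; 0; 0; 1; 0; 0; 0], [:: 2; 2; 4; 2; 3; 2; 0; 3; 0; 1; 1; 0; 4; 0; 2]);
(5, [:: 0; 0; 0; 0; 1; 0; 0; 0; 0; 0; 0; 0; 0; 0; 0], [:: 3; 1; 1; 2; 3; 0; 3; 4; 1; 1; 2; 0; 2; 3; 0]);
(5, [:: 0; 0; 0; 0; 1; 0; 0; 0; 0; 0; 0; 0; 0; 0; 0], [:: 1; 3; 4; 1; 3; 0; 0; 2; 1; 0; 1; 2; 2; 3; 3]);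
(1, [:: 0; 0; 0; 0; 0; 0; 0; 0; 1; 0; 0; 1; 0; 0; 0], [:: 6; 0; 2; 3; 1; 4; 1; 2; 0; 2; 2; 0; 0; 0; 3]);
(14, [:: 0; 0; 0; 0; 0; 0; 0; 1; 0; 0; 0; 1; 0; 0; 0], [:: 1; 1; 2; 4; 2; 4; 5; 1; 1; 2; 2; 1; 0; 0; 0]);
(5, [:: 0; 0; 0; 0; 0; 0; 0; 0; 0; 0; 0; 0; 0; 1; 0], [:: 5; 1; 4; 0; 2; 0; 2; 0; 1; 2; 2; 3; 1; 3; 0]);
(9, [:: 0; 0; 0; 0; 1; 0; 0; 0; 0; 0; 0; 0; 0; 0; 0], [:: 2; 1; 1; 4; 2; 3; 4; 0; 1; 0; 1; 3; 0; 3; 1]);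
(3, [:: 0; 0; 0; 0; 0; 0; 0; 1; 0; 0; 0; 0; 0; 0; 0], [:: 1; 0; 5; 0; 2; 2; 1; 2; 2; 1; 4; 1; 3; 2; 0]);
(8, [:: 0; 0; 0; 0; 0; 0; 0; 0; 0; 0; 0; 0; 0; 0; 1], [:: 4; 2; 0; 1; 1; 2; 2; 0; 0; 3; 2; 1; 3; 3; 2]);
(8, [:: 0; 0; 1; 0; 0; 0; 0; 0; 0; 0; 0; 0; 0; 0; 0], [:: 2; 2; 2; 3; 3; 0; 2; 1; 0; 5; 3; 1; 1; 0; 1]);
(11, [:: 0; 0; 0; 0; 0; 0; 0; 0; 0; 0; 0; 0; 0; 1; 0], [:: 2; 1; 4; 4; 0; 0; 5; 0; 1; 1; 3; 0; 4; 0; 1]);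
(11, [:: 0; 0; 0; 1; 0; 0; 0; 0; 1; 0; 0; 0; 0; 0; 0], [:: 1; 1; 2; 3; 2; 2; 2; 1; 3; 0; 3; 0; 3; 3; 0]);
(1, [:: 0; 0; 0; 0; 0; 0; 0; 0; 1; 0; 0; 0; 0; 0; 0], [:: 7; 0; 0; 2; 1; 1; 5; 1; 1; 2; 0; 1; 2; 2; 1]);
(2, [:: 0; 0; 0; 0; 0; 0; 0; 0; 0; 0; 1; 0; 0; 1; 0], [:: 1; 3; 0; 2; 0; 1; 5; 0; 2; 4; 2; 1; 4; 0; 1]);
(13, [:: 0; 0; 0; 0; 0; 0; 0; 0; 0; 1; 0; 0; 0; 0; 0], [:: 4; 3; 0; 2; 0; 5; 0; 0; 2; 0; 4; 1; 4; 0; 1]);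
(8, [:: 0; 0; 0; 0; 0; 0; 0; 0; 0; 0; 0; 0; 0; 0; 1], [:: 5; 5; 1; 0; 2; 1; 2; 0; 0; 2; 1; 3; 1; 3; 0]);
(8, [:: 0; 0; 0; 0; 0; 0; 0; 0; 0; 0; 0; 0; 1; 0; 0], [:: 7; 1; 1; 0; 2; 2; 0; 2; 0; 4; 2; 2; 1; 1; 1]);
(0, [:: 0; 0; 0; 0; 0; 0; 0; 0; 0; 0; 1; 1; 0; 0; 0], [:: 0; 2; 3; 0; 1; 0; 5; 3; 1; 5; 1; 0; 2; 2; 1]);
(11, [:: 0; 0; 0; 0; 0; 0; 0; 0; 0; 0; 0; 0; 0; 1; 0], [:: 0; 5; 0; 2; 1; 1; 3; 3; 3; 1; 1; 0; 4; 0; 2]);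
(8, [:: 0; 0; 0; 0; 0; 0; 0; 0; 0; 0; 0; 0; 0; 0; 1], [:: 5; 1; 2; 1; 1; 1; 0; 3; 0; 1; 0; 3; 2; 3; 3]);
(13, [:: 0; 0; 0; 0; 0; 0; 0; 0; 0; 0; 0; 0; 0; 0; 1], [:: 2; 1; 1; 0; 3; 2; 0; 1; 3; 2; 3; 3; 4; 0; 1]);
(8, [:: 0; 0; 0; 0; 0; 0; 0; 0; 0; 0; 0; 0; 0; 1; 0], [:: 2; 3; 0; 1; 1; 4; 5; 0; 0; 1; 2; 3; 4; 0; 0]);
(0, [:: 0; 0; 0; 0; 0; 0; 0; 0; 0; 0; 0; 2; 0; 0; 0], [:: 0; 1; 4; 2; 0; 5; 1; 2; 3; 2; 4; 0; 1; 0; 1]);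
(14, [:: 0; 0; 1; 0; 0; 0; 0; 0; 0; 0; 0; 0; 0; 0; 0], [:: 1; 3; 0; 1; 3; 2; 3; 4; 1; 0; 0; 2; 3; 3; 0]);
(10, [:: 0; 0; 0; 0; 1; 0; 0; 0; 0; 0; 0; 0; 0; 0; 0], [:: 1; 2; 3; 4; 2; 2; 1; 1; 0; 2; 0; 2; 4; 0; 2]);
(5, [:: 0; 0; 0; 0; 1; 0; 0; 0; 0; 0; 0; 0; 0; 0; 0], [:: 1; 4; 2; 2; 3; 0; 3; 1; 3; 2; 1; 0; 0; 1; 3]);
(13, [:: 0; 0; 0; 0; 0; 0; 0; 0; 0; 0; 0; 0; 0; 0; 2], [:: 2; 3; 0; 0; 3; 6; 4; 1; 1; 3; 0; 0; 3; 0; 0]);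
(11, [:: 0; 0; 0; 0; 0; 0; 0; 0; 0; 0; 0; 0; 1; 0; 1], [:: 2; 2; 0; 1; 3; 3; 1; 1; 0; 3; 4; 0; 2; 1; 3]);
(4, [:: 0; 0; 0; 0; 0; 0; 0; 0; 0; 0; 0; 0; 1; 0; 0], [:: 1; 5; 0; 2; 0; 3; 1; 4; 2; 1; 0; 2; 0; 3; 2]);
(2, [:: 0; 0; 0; 0; 0; 0; 0; 0; 0; 0; 0; 0; 1; 0; 0], [:: 2; 1; 0; 0; 3; 3; 2; 1; 1; 2; 4; 0; 4; 1; 2]);
(4, [:: 0; 0; 0; 0; 0; 0; 0; 0; 0; 1; 0; 0; 0; 0; 1], [:: 2; 0; 4; 2; 0; 4; 0; 3; 3; 0; 2; 1; 2; 1; 2]);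
(13, [:: 0; 0; 0; 0; 0; 0; 0; 0; 2; 0; 0; 0; 0; 0; 0], [:: 4; 1; 0; 2; 2; 2; 2; 3; 0; 3; 0; 1; 4; 0; 2]);
(3, [:: 0; 0; 0; 0; 0; 0; 0; 1; 0; 0; 0; 1; 0; 0; 0], [:: 1; 2; 4; 0; 0; 3; 1; 0; 2; 1; 3; 3; 4; 0; 2]);
(0, [:: 0; 0; 0; 0; 0; 0; 0; 1; 1; 0; 0; 0; 0; 0; 0], [:: 0; 0; 1; 2; 3; 4; 2; 1; 3; 5; 0; 2; 1; 1; 1]);
(6, [:: 0; 0; 0; 1; 1; 0; 0; 0; 0; 0; 0; 0; 0; 0; 0], [:: 2; 6; 2; 2; 0; 1; 0; 4; 2; 0; 0; 1; 1; 2; 3]);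
(7, [:: 0; 0; 0; 1; 0; 0; 0; 0; 0; 0; 0; 0; 0; 0; 0], [:: 3; 4; 2; 4; 1; 2; 0; 0; 1; 1; 2; 1; 0; 3; 2]);
(14, [:: 0; 0; 1; 0; 0; 0; 0; 1; 0; 0; 0; 0; 0; 0; 0], [:: 2; 1; 4; 1; 2; 1; 2; 2; 2; 3; 0; 3; 0; 3; 0]);
(10, [:: 1; 0; 0; 0; 0; 0; 0; 0; 0; 0; 0; 0; 0; 0; 0], [:: 0; 1; 2; 4; 2; 1; 5; 3; 0; 2; 0; 0; 4; 0; 2]);
(3, [:: 0; 0; 0; 0; 0; 0; 0; 0; 0; 0; 0; 0; 1; 1; 0], [:: 1; 6; 2; 0; 0; 3; 1; 0; 1; 2; 3; 2; 4; 0; 1]);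
(0, [:: 0; 0; 0; 0; 0; 0; 0; 0; 0; 0; 1; 1; 0; 0; 0], [:: 0; 2; 1; 3; 3; 1; 1; 2; 0; 2; 3; 3; 4; 1; 0]);
(10, [:: 0; 0; 0; 1; 0; 0; 0; 0; 0; 0; 0; 0; 0; 0; 0], [:: 7; 1; 2; 3; 1; 5; 3; 0; 1; 0; 0; 1; 1; 0; 1]);
(10, [:: 0; 0; 0; 0; 0; 0; 0; 0; 0; 0; 0; 0; 1; 0; 0], [:: 5; 0; 0; 4; 1; 1; 2; 3; 2; 1; 0; 1; 2; 1; 3]);
(7, [:: 0; 0; 0; 0; 0; 0; 0; 0; 0; 0; 0; 0; 1; 1; 0], [:: 4; 1; 0; 0; 3; 1; 1; 0; 3; 5; 3; 1; 1; 1; 2]);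
(5, [:: 0; 0; 0; 0; 1; 0; 0; 0; 0; 0; 0; 0; 0; 0; 0], [:: 2; 5; 2; 3; 0; 0; 1; 1; 2; 3; 4; 2; 0; 0; 1]);
(13, [:: 0; 0; 0; 0; 2; 0; 0; 0; 0; 0; 0; 0; 0; 0; 0], [:: 3; 2; 4; 2; 0; 5; 0; 2; 0; 2; 1; 0; 2; 0; 3]);
(4, [:: 0; 0; 0; 0; 0; 0; 1; 0; 0; 0; 0; 0; 0; 1; 0], [:: 0; 3; 5; 3; 0; 2; 2; 1; 1; 1; 4; 0; 4; 0; 0]);
(13, [:: 0; 0; 0; 1; 0; 0; 0; 0; 1; 0; 0; 0; 0; 0; 0], [:: 6; 2; 1; 0; 2; 1; 1; 2; 3; 0; 0; 3; 2; 0; 3]);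
(12, [:: 0; 0; 0; 0; 0; 0; 0; 0; 0; 0; 1; 1; 0; 0; 0], [:: 1; 2; 5; 3; 1; 0; 1; 2; 0; 4; 3; 0; 0; 1; 3]);
(13, [:: 0; 0; 0; 1; 0; 0; 0; 0; 0; 0; 0; 0; 0; 0; 0], [:: 6; 3; 1; 0; 3; 1; 3; 0; 1; 2; 4; 2; 0; 0; 0]);
(12, [:: 0; 0; 0; 0; 1; 0; 0; 0; 0; 0; 0; 0; 0; 0; 0], [:: 6; 2; 1; 1; 3; 1; 1; 1; 3; 3; 1; 3; 0; 0; 0]);
(9, [:: 0; 0; 0; 0; 0; 0; 0; 1; 1; 0; 0; 0; 0; 0; 0], [:: 1; 2; 3; 1; 3; 3; 2; 0; 3; 0; 4; 2; 0; 0; 2]);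
(8, [:: 0; 0; 0; 0; 1; 0; 0; 0; 0; 0; 0; 0; 0; 0; 0], [:: 6; 1; 4; 2; 0; 1; 3; 0; 0; 5; 0; 0; 1; 2; 1]);
(5, [:: 0; 0; 0; 0; 0; 0; 0; 0; 0; 0; 0; 0; 0; 1; 0], [:: 1; 5; 2; 1; 2; 0; 4; 4; 0; 0; 2; 0; 2; 0; 3]);
(10, [:: 0; 0; 0; 0; 0; 1; 0; 0; 0; 0; 0; 0; 0; 0; 0], [:: 3; 1; 1; 0; 3; 1; 2; 3; 1; 2; 0; 3; 3; 0; 3]);
(12, [:: 0; 0; 0; 0; 0; 0; 0; 0; 0; 0; 0; 0; 0; 0; 0], [:: 2; 1; 1; 3; 3; 1; 5; 0; 1; 5; 0; 2; 0; 2; 0]);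
(0, [:: 0; 0; 0; 0; 0; 0; 0; 0; 1; 0; 0; 0; 0; 0; 0], [:: 0; 1; 2; 3; 0; 4; 3; 1; 3; 1; 2; 0; 2; 3; 1]);
(11, [:: 0; 0; 0; 0; 0; 0; 0; 0; 0; 0; 0; 0; 0; 1; 1], [:: 7; 2; 1; 1; 0; 2; 3; 0; 1; 4; 3; 0; 2; 0; 0]);
(1, [:: 0; 0; 0; 0; 0; 0; 0; 1; 1; 0; 0; 0; 0; 0; 0], [:: 1; 0; 2; 4; 0; 2; 3; 0; 1; 0; 3; 3; 4; 1; 2]);
(14, [:: 0; 0; 0; 1; 1; 0; 0; 0; 0; 0; 0; 0; 0; 0; 0], [:: 3; 4; 3; 1; 0; 3; 0; 2; 3; 1; 3; 3; 0; 0; 0]);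
(2, [:: 0; 0; 0; 0; 0; 0; 0; 0; 0; 0; 0; 0; 0; 0; 0], [:: 3; 1; 0; 2; 0; 2; 4; 1; 3; 2; 0; 1; 3; 1; 3]);
(2, [:: 0; 0; 0; 0; 0; 0; 1; 0; 0; 0; 0; 0; 0; 0; 0], [:: 2; 2; 0; 1; 3; 5; 1; 1; 2; 0; 4; 0; 0; 2; 3]);
(11, [:: 0; 0; 0; 0; 0; 1; 0; 0; 0; 0; 0; 0; 0; 0; 0], [:: 4; 0; 0; 2; 1; 1; 3; 1; 1; 4; 4; 0; 2; 2; 1]);
(12, [:: 0; 0; 0; 0; 1; 0; 0; 0; 1; 0; 0; 0; 0; 0; 0], [:: 3; 6; 1; 2; 2; 6; 1; 1; 0; 0; 1; 2; 0; 0; 1]);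
(1, [:: 0; 0; 0; 0; 0; 0; 0; 0; 0; 0; 0; 0; 1; 0; 1], [:: 7; 0; 2; 0; 1; 2; 2; 1; 2; 3; 1; 0; 2; 3; 0]);
(14, [:: 0; 1; 0; 0; 0; 0; 0; 0; 0; 0; 0; 0; 0; 0; 0], [:: 6; 1; 1; 1; 2; 1; 3; 0; 1; 0; 4; 1; 3; 2; 0]);
(12, [:: 0; 0; 0; 1; 0; 0; 0; 0; 1; 0; 0; 0; 0; 0; 0], [:: 2; 3; 5; 0; 2; 1; 4; 1; 3; 3; 0; 1; 0; 1; 0]);
(8, [:: 0; 0; 0; 0; 0; 0; 0; 0; 0; 0; 0; 0; 0; 2; 0], [:: 1; 4; 3; 0; 0; 3; 2; 0; 0; 3; 4; 1; 4; 1; 0]);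
(5, [:: 0; 0; 0; 0; 0; 0; 0; 0; 0; 0; 0; 1; 0; 1; 0], [:: 2; 1; 2; 0; 3; 0; 4; 4; 1; 1; 2; 2; 4; 0; 0]);
(4, [:: 0; 0; 0; 0; 0; 0; 0; 0; 0; 0; 0; 1; 0; 0; 1], [:: 1; 5; 4; 0; 0; 6; 1; 3; 1; 2; 2; 0; 1; 0; 0]);
(0, [:: 0; 0; 0; 0; 0; 0; 0; 0; 0; 0; 0; 0; 0; 0; 0], [:: 0; 0; 3; 3; 1; 1; 5; 0; 2; 4; 1; 2; 1; 0; 3]);
(9, [:: 0; 0; 0; 0; 0; 0; 1; 1; 0; 0; 0; 0; 0; 0; 0], [:: 3; 4; 2; 0; 1; 2; 4; 2; 2; 0; 1; 1; 0; 3; 1]);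
(3, [:: 0; 0; 0; 0; 0; 0; 0; 0; 0; 0; 0; 1; 0; 0; 0], [:: 7; 3; 1; 0; 0; 1; 2; 2; 0; 3; 3; 0; 3; 1; 0]);
(12, [:: 0; 0; 0; 1; 0; 0; 0; 0; 1; 0; 0; 0; 0; 0; 0], [:: 1; 3; 2; 0; 1; 2; 3; 3; 1; 0; 3; 1; 0; 3; 3]);
(2, [:: 0; 0; 0; 0; 0; 0; 0; 0; 0; 0; 0; 0; 0; 0; 0], [:: 3; 0; 0; 2; 1; 2; 2; 3; 1; 1; 4; 2; 3; 2; 0]);
(5, [:: 0; 0; 0; 1; 0; 0; 0; 0; 0; 0; 0; 0; 0; 0; 0], [:: 2; 2; 3; 0; 1; 0; 3; 2; 1; 3; 3; 2; 0; 3; 1]);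
(8, [:: 0; 0; 0; 0; 0; 0; 0; 0; 0; 0; 1; 0; 0; 0; 0], [:: 3; 1; 1; 0; 2; 2; 3; 0; 0; 5; 2; 1; 1; 3; 2]);
(8, [:: 0; 0; 0; 0; 2; 0; 0; 0; 0; 0; 0; 0; 0; 0; 0], [:: 3; 2; 2; 3; 3; 1; 5; 0; 0; 1; 3; 1; 0; 0; 2]);
(8, [:: 0; 0; 1; 0; 0; 0; 0; 0; 0; 0; 0; 1; 0; 0; 0], [:: 2; 3; 1; 1; 3; 0; 5; 2; 0; 5; 2; 1; 0; 0; 1]);
(8, [:: 0; 0; 0; 0; 0; 0; 0; 0; 0; 0; 1; 1; 0; 1; 0], [:: 0; 2; 1; 0; 3; 2; 2; 4; 0; 2; 4; 1; 4; 1; 0]);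
(6, [:: 0; 0; 0; 0; 0; 0; 0; 0; 0; 0; 0; 0; 0; 0; 1], [:: 4; 3; 0; 0; 3; 1; 0; 4; 1; 5; 0; 0; 2; 3; 0]);
(6, [:: 0; 0; 0; 0; 0; 0; 0; 0; 0; 0; 0; 0; 1; 0; 0], [:: 5; 1; 1; 4; 2; 2; 0; 0; 1; 1; 3; 3; 0; 1; 2]);
(3, [:: 0; 0; 0; 0; 0; 0; 0; 0; 0; 0; 0; 0; 1; 0; 0], [:: 3; 1; 2; 0; 0; 6; 2; 1; 1; 2; 3; 0; 3; 1; 1]);
(14, [:: 0; 0; 0; 0; 1; 0; 0; 0; 0; 0; 0; 0; 0; 0; 0], [:: 2; 4; 2; 2; 3; 0; 0; 1; 2; 1; 1; 2; 3; 3; 0]);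
(13, [:: 0; 0; 0; 0; 0; 0; 0; 1; 0; 0; 0; 0; 0; 0; 0], [:: 7; 3; 4; 0; 1; 4; 1; 0; 1; 1; 0; 1; 1; 0; 2]);
(5, [:: 0; 0; 0; 0; 1; 0; 0; 0; 0; 0; 0; 0; 0; 0; 0], [:: 2; 3; 4; 2; 2; 0; 3; 0; 1; 1; 0; 3; 4; 1; 0]);
(8, [:: 0; 0; 0; 0; 0; 0; 0; 0; 0; 0; 1; 0; 0; 1; 0], [:: 0; 5; 1; 2; 3; 0; 2; 1; 0; 3; 0; 3; 4; 1; 1]);
(7, [:: 0; 0; 0; 1; 1; 0; 0; 0; 0; 0; 0; 0; 0; 0; 0], [:: 4; 2; 5; 0; 2; 2; 0; 0; 2; 0; 2; 0; 1; 3; 3]);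
(11, [:: 0; 0; 0; 0; 0; 0; 0; 0; 1; 0; 0; 0; 0; 0; 0], [:: 0; 2; 3; 1; 3; 5; 2; 4; 1; 1; 0; 0; 2; 0; 2]);
(8, [:: 0; 0; 0; 0; 0; 0; 0; 0; 0; 0; 0; 0; 1; 1; 0], [:: 1; 6; 0; 2; 2; 2; 1; 0; 0; 2; 1; 3; 3; 2; 1]);
(12, [:: 0; 0; 0; 0; 0; 0; 0; 0; 0; 0; 1; 0; 0; 0; 0], [:: 2; 5; 0; 2; 1; 3; 5; 1; 2; 1; 0; 3; 0; 1; 0]);
(8, [:: 0; 0; 0; 0; 0; 0; 0; 0; 0; 1; 0; 0; 0; 0; 0], [:: 2; 1; 3; 0; 0; 3; 5; 1; 0; 0; 1; 3; 3; 1; 3]);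
(4, [:: 0; 0; 0; 0; 0; 0; 0; 0; 0; 0; 0; 1; 0; 0; 0], [:: 1; 0; 3; 2; 0; 2; 5; 3; 0; 4; 1; 0; 0; 2; 3]);
(4, [:: 0; 0; 0; 0; 0; 0; 0; 0; 0; 0; 0; 0; 1; 0; 0], [:: 5; 0; 3; 4; 0; 1; 0; 2; 0; 3; 1; 3; 0; 3; 1]);
(13, [:: 0; 0; 1; 0; 0; 0; 0; 0; 0; 0; 0; 0; 0; 0; 0], [:: 1; 1; 0; 3; 2; 2; 0; 1; 3; 4; 2; 3; 2; 0; 2]);
(0, [:: 0; 0; 0; 0; 0; 0; 0; 0; 1; 0; 0; 0; 0; 1; 0], [:: 0; 1; 5; 2; 2; 3; 5; 2; 0; 2; 3; 0; 1; 0; 0]);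
(5, [:: 0; 0; 1; 0; 0; 0; 0; 0; 0; 0; 0; 1; 0; 0; 0], [:: 2; 5; 5; 1; 1; 0; 0; 2; 1; 5; 2; 0; 0; 1; 1]);
(10, [:: 0; 0; 1; 1; 0; 0; 0; 0; 0; 0; 0; 0; 0; 0; 0], [:: 5; 2; 4; 0; 2; 4; 0; 4; 1; 0; 0; 1; 0; 2; 1]);
(5, [:: 0; 0; 1; 0; 1; 0; 0; 0; 0; 0; 0; 0; 0; 0; 0], [:: 2; 2; 3; 2; 1; 0; 0; 4; 2; 5; 1; 1; 0; 1; 2]);
(13, [:: 0; 0; 0; 0; 0; 0; 0; 0; 0; 1; 0; 1; 0; 0; 0], [:: 2; 1; 1; 0; 3; 1; 0; 4; 2; 5; 3; 0; 2; 0; 2]);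
(14, [:: 0; 0; 0; 0; 0; 0; 0; 1; 0; 0; 0; 0; 0; 0; 0], [:: 0; 3; 2; 4; 1; 2; 2; 0; 1; 1; 4; 1; 3; 2; 0]);
(11, [:: 0; 0; 0; 0; 1; 0; 0; 0; 0; 0; 0; 0; 0; 1; 0], [:: 2; 2; 3; 3; 3; 0; 2; 0; 1; 1; 4; 0; 1; 1; 3]);
(8, [:: 0; 0; 0; 0; 0; 0; 0; 0; 0; 0; 0; 0; 0; 0; 0], [:: 3; 2; 3; 4; 2; 3; 0; 1; 0; 3; 0; 1; 0; 1; 3]);
(8, [:: 0; 0; 0; 0; 0; 0; 0; 0; 0; 0; 0; 0; 1; 0; 1], [:: 2; 0; 1; 3; 3; 2; 0; 4; 0; 5; 2; 1; 0; 1; 2]);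
(4, [:: 0; 0; 0; 0; 0; 0; 0; 0; 0; 0; 0; 1; 0; 0; 0], [:: 3; 0; 1; 2; 0; 1; 3; 4; 1; 5; 1; 0; 2; 3; 0]);
(8, [:: 0; 0; 0; 0; 0; 0; 0; 0; 0; 0; 0; 0; 0; 0; 1], [:: 6; 1; 5; 2; 0; 1; 0; 2; 0; 2; 0; 2; 1; 2; 2]);
(2, [:: 0; 0; 0; 0; 0; 1; 0; 0; 0; 0; 0; 0; 0; 0; 0], [:: 1; 5; 0; 3; 0; 3; 1; 1; 3; 1; 2; 0; 4; 1; 1]);
(11, [:: 0; 0; 0; 0; 0; 0; 0; 0; 0; 0; 0; 0; 0; 0; 2], [:: 3; 0; 1; 1; 2; 2; 4; 0; 3; 3; 2; 0; 4; 1; 0]);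
(11, [:: 0; 0; 0; 0; 2; 0; 0; 0; 0; 0; 0; 0; 0; 0; 0], [:: 2; 3; 3; 4; 0; 2; 0; 0; 1; 2; 3; 0; 0; 3; 3]);
(8, [:: 0; 0; 0; 0; 0; 0; 0; 0; 0; 0; 0; 0; 1; 1; 0], [:: 2; 3; 1; 0; 0; 1; 4; 4; 0; 3; 3; 0; 1; 1; 3]);
(11, [:: 1; 0; 0; 0; 0; 0; 0; 0; 0; 0; 0; 0; 0; 0; 0], [:: 2; 1; 5; 1; 2; 6; 2; 0; 0; 1; 0; 0; 2; 3; 1]);
(11, [:: 0; 0; 0; 0; 0; 0; 0; 0; 1; 0; 0; 0; 0; 0; 1], [:: 1; 4; 0; 4; 0; 2; 1; 1; 2; 4; 4; 0; 2; 1; 0]);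
(0, [:: 0; 0; 0; 0; 0; 0; 0; 0; 1; 0; 0; 0; 0; 1; 0], [:: 0; 6; 2; 1; 0; 5; 2; 1; 2; 0; 1; 1; 4; 0; 1]);
(3, [:: 0; 0; 0; 0; 0; 0; 0; 1; 0; 0; 0; 1; 0; 0; 0], [:: 4; 1; 5; 0; 0; 2; 4; 1; 3; 1; 1; 0; 1; 0; 3]);
(13, [:: 0; 0; 0; 1; 0; 0; 0; 0; 1; 0; 0; 0; 0; 0; 0], [:: 3; 1; 1; 3; 3; 1; 1; 3; 1; 4; 4; 1; 0; 0; 0]);
(4, [:: 0; 0; 0; 0; 0; 0; 0; 0; 1; 0; 0; 0; 0; 0; 0], [:: 2; 1; 0; 4; 0; 1; 3; 3; 2; 5; 1; 0; 0; 2; 2]);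
(0, [:: 0; 0; 0; 0; 0; 0; 0; 0; 0; 0; 0; 1; 0; 0; 0], [:: 0; 3; 1; 2; 0; 1; 4; 1; 3; 2; 2; 3; 1; 0; 3]);
(8, [:: 0; 0; 0; 0; 0; 0; 0; 0; 0; 0; 0; 0; 0; 0; 0], [:: 0; 4; 4; 0; 1; 2; 0; 2; 0; 4; 3; 1; 2; 0; 3]);
(11, [:: 0; 0; 0; 0; 0; 0; 1; 0; 0; 0; 0; 0; 0; 0; 0], [:: 0; 5; 0; 2; 1; 5; 2; 1; 1; 2; 1; 0; 0; 3; 3]);
(7, [:: 0; 0; 0; 0; 0; 0; 0; 0; 0; 0; 1; 0; 0; 0; 0], [:: 4; 3; 0; 4; 0; 2; 1; 0; 0; 3; 4; 2; 1; 2; 0]);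
(14, [:: 0; 0; 0; 0; 0; 0; 0; 0; 0; 0; 0; 2; 0; 0; 0], [:: 1; 6; 2; 3; 1; 0; 1; 2; 0; 2; 2; 1; 4; 1; 0]);
(12, [:: 0; 0; 0; 0; 0; 0; 0; 0; 1; 0; 0; 1; 0; 0; 0], [:: 2; 3; 3; 1; 0; 4; 1; 2; 3; 1; 4; 2; 0; 0; 0]);
(3, [:: 0; 0; 0; 0; 0; 0; 0; 0; 0; 0; 0; 0; 0; 0; 1], [:: 1; 0; 3; 0; 3; 5; 2; 0; 0; 5; 1; 2; 1; 3; 0]);
(8, [:: 0; 0; 0; 0; 1; 0; 0; 0; 0; 0; 0; 1; 0; 0; 0], [:: 1; 1; 2; 2; 3; 0; 1; 3; 0; 2; 4; 2; 2; 0; 3]);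
(11, [:: 0; 0; 0; 0; 0; 0; 0; 0; 0; 0; 0; 0; 1; 0; 0], [:: 3; 0; 1; 2; 1; 3; 1; 4; 2; 2; 0; 0; 3; 3; 1]);
(13, [:: 0; 0; 0; 0; 1; 0; 0; 0; 0; 0; 0; 0; 0; 0; 1], [:: 3; 3; 5; 2; 0; 1; 4; 3; 1; 1; 0; 0; 3; 0; 0]);
(3, [:: 0; 0; 0; 0; 0; 0; 0; 0; 0; 0; 0; 0; 0; 1; 1], [:: 2; 1; 0; 0; 3; 3; 1; 3; 2; 1; 2; 3; 4; 0; 1]);
(2, [:: 0; 0; 0; 0; 0; 0; 0; 0; 0; 0; 0; 0; 1; 1; 0], [:: 1; 2; 0; 0; 3; 5; 2; 2; 3; 1; 1; 2; 3; 0; 1]);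
(0, [:: 0; 0; 0; 0; 0; 0; 1; 0; 0; 0; 0; 0; 0; 0; 0], [:: 0; 3; 3; 0; 1; 1; 4; 1; 1; 4; 2; 3; 0; 1; 2]);
(11, [:: 0; 1; 0; 0; 0; 0; 0; 0; 0; 0; 0; 0; 0; 0; 0], [:: 1; 4; 3; 1; 3; 6; 1; 3; 0; 0; 1; 0; 0; 1; 2]);
(11, [:: 0; 1; 0; 0; 0; 0; 0; 0; 0; 0; 0; 0; 0; 1; 0], [:: 1; 3; 2; 1; 2; 1; 2; 0; 3; 0; 3; 0; 2; 3; 3]);
(8, [:: 0; 0; 0; 0; 1; 0; 0; 0; 0; 0; 0; 0; 0; 0; 1], [:: 2; 4; 1; 1; 2; 1; 0; 2; 0; 3; 3; 0; 3; 3; 1]);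
(8, [:: 0; 0; 0; 0; 0; 0; 0; 0; 0; 0; 0; 0; 0; 0; 0], [:: 5; 6; 1; 1; 1; 6; 2; 0; 0; 1; 0; 0; 1; 1; 1]);
(14, [:: 0; 0; 0; 0; 0; 0; 0; 0; 0; 0; 1; 0; 0; 0; 0], [:: 1; 6; 3; 1; 0; 0; 1; 0; 3; 5; 2; 1; 2; 1; 0]);
(8, [:: 0; 0; 1; 0; 0; 0; 0; 0; 0; 0; 0; 0; 0; 0; 0], [:: 1; 6; 1; 3; 1; 2; 0; 1; 0; 3; 0; 3; 1; 1; 3]);
(8, [:: 0; 1; 0; 0; 1; 0; 0; 0; 0; 0; 0; 0; 0; 0; 0], [:: 2; 1; 4; 2; 3; 1; 5; 0; 0; 2; 1; 0; 3; 2; 0]);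
(8, [:: 0; 0; 0; 0; 0; 0; 0; 0; 0; 1; 0; 0; 0; 0; 1], [:: 5; 1; 2; 3; 3; 2; 0; 1; 0; 1; 4; 1; 3; 0; 0]);
(14, [:: 0; 0; 0; 0; 0; 0; 0; 1; 1; 0; 0; 0; 0; 0; 0], [:: 1; 4; 1; 1; 3; 2; 2; 2; 0; 5; 1; 1; 0; 3; 0]);
(11, [:: 0; 0; 0; 0; 1; 0; 0; 0; 0; 0; 0; 0; 0; 1; 0], [:: 5; 6; 1; 1; 0; 4; 1; 1; 2; 0; 1; 0; 4; 0; 0]);
(4, [:: 0; 0; 0; 0; 0; 0; 0; 0; 2; 0; 0; 0; 0; 0; 0], [:: 3; 0; 3; 3; 0; 3; 2; 2; 0; 5; 0; 0; 3; 1; 1]);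
(0, [:: 0; 0; 0; 0; 0; 0; 1; 0; 1; 0; 0; 0; 0; 0; 0], [:: 0; 2; 1; 4; 0; 3; 2; 3; 2; 0; 2; 1; 2; 1; 3]);
(4, [:: 0; 0; 0; 0; 0; 0; 0; 0; 0; 0; 0; 0; 1; 0; 0], [:: 7; 1; 2; 0; 0; 1; 2; 0; 3; 1; 0; 3; 3; 2; 1]);
(2, [:: 0; 0; 0; 0; 0; 0; 0; 0; 1; 0; 0; 0; 0; 1; 0], [:: 2; 6; 0; 1; 0; 2; 2; 1; 2; 1; 1; 3; 4; 1; 0]);
(9, [:: 0; 0; 0; 0; 0; 0; 0; 1; 0; 0; 0; 0; 0; 0; 0], [:: 3; 1; 1; 4; 2; 4; 5; 0; 1; 0; 0; 3; 1; 1; 0]);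
(4, [:: 0; 0; 0; 0; 0; 0; 0; 0; 1; 0; 1; 0; 0; 0; 0], [:: 1; 6; 0; 3; 0; 2; 2; 4; 0; 1; 0; 2; 4; 1; 0]);
(8, [:: 0; 0; 0; 0; 0; 0; 0; 0; 0; 0; 1; 1; 0; 0; 0], [:: 1; 4; 3; 0; 0; 1; 1; 4; 0; 4; 0; 2; 2; 3; 1]);
(4, [:: 0; 0; 0; 0; 0; 0; 0; 0; 0; 0; 0; 0; 0; 0; 1], [:: 4; 0; 1; 2; 0; 1; 2; 1; 3; 5; 1; 0; 1; 3; 2]);
(14, [:: 0; 0; 0; 0; 1; 0; 0; 0; 0; 0; 0; 1; 0; 0; 0], [:: 2; 2; 3; 3; 0; 6; 1; 2; 2; 1; 1; 0; 0; 3; 0]);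
(10, [:: 0; 0; 0; 0; 0; 1; 0; 0; 1; 0; 0; 0; 0; 0; 0], [:: 7; 2; 3; 2; 0; 0; 3; 4; 0; 1; 0; 0; 2; 1; 1]);
(14, [:: 0; 0; 0; 1; 0; 0; 0; 0; 0; 0; 0; 0; 0; 0; 0], [:: 6; 3; 1; 3; 1; 4; 1; 0; 3; 0; 0; 2; 1; 1; 0]);
(0, [:: 0; 0; 0; 0; 0; 0; 0; 1; 1; 0; 0; 0; 0; 0; 0], [:: 0; 1; 2; 3; 0; 2; 3; 3; 3; 2; 1; 2; 4; 0; 0]);
(13, [:: 0; 0; 0; 0; 0; 0; 0; 0; 0; 0; 0; 0; 0; 0; 2], [:: 2; 1; 0; 1; 3; 4; 5; 1; 2; 2; 0; 1; 2; 0; 2]);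
(1, [:: 0; 0; 0; 0; 0; 0; 0; 1; 0; 0; 0; 1; 0; 0; 0], [:: 1; 0; 5; 2; 0; 6; 1; 1; 2; 4; 2; 0; 0; 1; 1]);
(4, [:: 0; 0; 0; 0; 0; 0; 1; 0; 0; 0; 1; 0; 0; 0; 0], [:: 3; 2; 1; 0; 0; 1; 3; 1; 2; 3; 4; 1; 0; 2; 3]);
(8, [:: 0; 0; 0; 0; 0; 0; 0; 0; 0; 0; 1; 1; 0; 0; 0], [:: 1; 2; 1; 1; 3; 0; 5; 2; 0; 3; 0; 3; 0; 2; 3]);
(11, [:: 0; 0; 0; 0; 0; 0; 0; 0; 2; 0; 0; 0; 0; 0; 0], [:: 4; 1; 0; 2; 0; 2; 3; 2; 3; 4; 4; 0; 0; 0; 1]);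
(13, [:: 0; 0; 0; 0; 0; 0; 0; 1; 0; 0; 0; 0; 0; 0; 0], [:: 0; 1; 5; 1; 2; 4; 1; 0; 2; 4; 2; 1; 0; 0; 3]);
(4, [:: 0; 0; 0; 0; 0; 0; 0; 0; 0; 1; 0; 0; 1; 0; 0], [:: 2; 1; 0; 3; 0; 5; 1; 2; 3; 1; 4; 1; 0; 1; 2]);
(14, [:: 0; 0; 1; 0; 1; 0; 0; 0; 0; 0; 0; 0; 0; 0; 0], [:: 5; 3; 0; 4; 0; 6; 0; 1; 0; 0; 4; 2; 1; 0; 0]);
(8, [:: 0; 0; 0; 0; 1; 0; 0; 0; 0; 0; 0; 0; 0; 1; 0], [:: 6; 3; 1; 4; 0; 2; 1; 0; 0; 2; 4; 1; 1; 0; 1]);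
(11, [:: 0; 0; 0; 0; 0; 0; 0; 0; 0; 0; 0; 0; 0; 0; 1], [:: 2; 0; 5; 0; 2; 4; 3; 0; 2; 1; 0; 0; 4; 1; 2]);
(4, [:: 0; 0; 0; 0; 0; 0; 0; 0; 0; 0; 0; 1; 0; 0; 1], [:: 2; 0; 3; 4; 0; 2; 0; 1; 0; 4; 1; 3; 3; 2; 1]);
(11, [:: 0; 0; 0; 0; 1; 0; 0; 0; 0; 0; 0; 0; 0; 0; 0], [:: 6; 4; 1; 1; 0; 1; 5; 0; 1; 1; 2; 0; 1; 0; 3]);
(11, [:: 0; 0; 0; 1; 1; 0; 0; 0; 0; 0; 0; 0; 0; 0; 0], [:: 2; 2; 2; 4; 2; 6; 1; 0; 1; 1; 0; 0; 2; 1; 2]);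
(14, [:: 0; 0; 0; 0; 0; 0; 1; 0; 1; 0; 0; 0; 0; 0; 0], [:: 1; 3; 3; 1; 3; 3; 0; 3; 3; 2; 1; 1; 0; 2; 0]);
(8, [:: 0; 0; 0; 0; 0; 0; 0; 0; 0; 0; 0; 0; 1; 0; 1], [:: 2; 1; 1; 0; 3; 4; 5; 0; 0; 5; 1; 2; 1; 1; 0]);
(11, [:: 0; 0; 0; 1; 0; 0; 0; 0; 0; 0; 0; 0; 0; 0; 0], [:: 3; 1; 2; 3; 3; 2; 2; 4; 1; 0; 4; 0; 1; 0; 0]);
(8, [:: 0; 0; 0; 0; 1; 0; 0; 0; 0; 0; 1; 0; 0; 0; 0], [:: 5; 2; 5; 1; 1; 0; 3; 2; 0; 1; 0; 1; 4; 1; 0]);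
(4, [:: 0; 0; 0; 0; 0; 0; 0; 0; 0; 0; 0; 0; 0; 0; 1], [:: 7; 3; 0; 2; 0; 2; 4; 4; 0; 1; 0; 0; 1; 0; 2]);
(14, [:: 0; 0; 0; 0; 0; 0; 0; 0; 0; 0; 1; 0; 0; 1; 0], [:: 2; 2; 3; 0; 1; 0; 3; 1; 3; 1; 3; 3; 4; 0; 0]);
(11, [:: 0; 0; 0; 1; 0; 0; 0; 0; 0; 0; 0; 0; 0; 0; 1], [:: 4; 5; 1; 0; 2; 1; 2; 0; 3; 1; 0; 0; 1; 3; 3]);
(4, [:: 0; 0; 0; 0; 0; 0; 0; 0; 0; 0; 0; 2; 0; 0; 0], [:: 2; 0; 2; 4; 0; 6; 0; 3; 0; 3; 2; 0; 3; 1; 0]);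
(4, [:: 0; 0; 0; 0; 0; 0; 0; 0; 0; 1; 0; 0; 0; 0; 0], [:: 3; 6; 1; 0; 0; 6; 0; 0; 2; 0; 2; 1; 1; 2; 2]);
(8, [:: 0; 0; 0; 0; 0; 0; 0; 0; 0; 0; 0; 1; 0; 0; 1], [:: 1; 4; 2; 0; 3; 6; 0; 1; 0; 4; 1; 0; 1; 3; 0]);
(8, [:: 0; 0; 0; 0; 1; 0; 0; 0; 0; 0; 0; 0; 0; 0; 0], [:: 6; 3; 1; 3; 1; 1; 0; 3; 0; 5; 1; 0; 1; 0; 1]);
(0, [:: 0; 0; 0; 0; 0; 0; 0; 1; 0; 0; 0; 0; 0; 1; 0], [:: 0; 2; 1; 3; 0; 1; 4; 0; 2; 5; 1; 1; 1; 3; 2]);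
(4, [:: 0; 0; 0; 0; 0; 0; 0; 1; 1; 0; 0; 1; 0; 0; 0], [:: 0; 4; 2; 2; 0; 2; 5; 2; 0; 1; 2; 3; 0; 0; 3]);
(8, [:: 0; 0; 1; 0; 1; 0; 0; 0; 0; 0; 0; 0; 0; 0; 0], [:: 6; 2; 0; 4; 0; 0; 5; 1; 0; 0; 0; 3; 2; 2; 1]);
(4, [:: 0; 0; 0; 0; 0; 0; 0; 0; 0; 0; 0; 1; 0; 1; 0], [:: 0; 1; 5; 3; 0; 6; 1; 2; 0; 1; 4; 0; 1; 0; 2]);
(3, [:: 0; 0; 0; 0; 0; 0; 0; 0; 0; 0; 1; 0; 0; 0; 1], [:: 2; 5; 0; 0; 1; 1; 4; 4; 1; 2; 0; 2; 3; 1; 0]);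
(13, [:: 0; 0; 1; 0; 0; 0; 0; 1; 0; 0; 0; 1; 0; 0; 0], [:: 5; 1; 2; 4; 1; 1; 4; 0; 2; 5; 1; 0; 0; 0; 0]);
(4, [:: 0; 0; 0; 0; 0; 1; 0; 0; 0; 0; 0; 0; 0; 0; 1], [:: 6; 6; 0; 1; 0; 0; 1; 1; 3; 3; 3; 0; 2; 0; 0]);
(7, [:: 0; 0; 0; 0; 0; 0; 0; 0; 0; 1; 0; 0; 1; 0; 1], [:: 3; 3; 0; 0; 1; 3; 1; 0; 1; 2; 3; 3; 4; 1; 1]);
(8, [:: 0; 0; 0; 0; 0; 0; 0; 0; 0; 1; 1; 1; 0; 0; 0], [:: 1; 4; 2; 0; 0; 1; 1; 4; 0; 3; 3; 1; 1; 3; 2]);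
(8, [:: 0; 0; 0; 0; 1; 0; 0; 0; 0; 0; 0; 0; 0; 0; 1], [:: 2; 6; 1; 3; 1; 2; 0; 1; 0; 1; 0; 3; 1; 2; 3]);
(4, [:: 0; 0; 0; 0; 0; 0; 1; 0; 0; 0; 0; 0; 0; 1; 0], [:: 1; 5; 4; 0; 0; 2; 0; 2; 3; 0; 2; 0; 1; 3; 3]);
(11, [:: 0; 0; 0; 0; 0; 0; 0; 0; 1; 0; 0; 0; 0; 0; 0], [:: 3; 5; 1; 2; 3; 6; 1; 1; 1; 0; 1; 0; 1; 0; 1]);
(8, [:: 0; 0; 0; 0; 1; 0; 0; 0; 0; 0; 0; 0; 1; 0; 0], [:: 2; 1; 5; 3; 1; 2; 5; 0; 0; 1; 0; 0; 4; 1; 1]);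
(11, [:: 0; 0; 0; 1; 1; 0; 0; 0; 1; 0; 0; 0; 0; 0; 0], [:: 2; 2; 2; 4; 0; 3; 1; 4; 0; 4; 0; 0; 4; 0; 0]);
(13, [:: 0; 0; 0; 0; 1; 0; 0; 1; 0; 0; 0; 0; 0; 0; 0], [:: 1; 1; 5; 2; 1; 2; 5; 2; 1; 0; 2; 1; 0; 0; 3]);
(8, [:: 0; 0; 0; 0; 0; 0; 0; 0; 0; 0; 0; 0; 0; 1; 0], [:: 6; 1; 1; 1; 2; 1; 5; 0; 0; 5; 2; 0; 1; 1; 0]);
(13, [:: 0; 0; 0; 1; 0; 0; 0; 0; 0; 0; 0; 1; 0; 0; 0], [:: 1; 3; 4; 0; 1; 0; 2; 1; 3; 4; 2; 3; 0; 0; 2]);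
(4, [:: 0; 0; 0; 0; 0; 0; 1; 1; 1; 0; 0; 0; 0; 0; 0], [:: 0; 3; 1; 4; 0; 3; 1; 0; 2; 2; 3; 1; 0; 3; 3]);
(4, [:: 0; 0; 0; 0; 0; 0; 0; 0; 0; 0; 0; 0; 0; 1; 1], [:: 4; 1; 4; 0; 0; 2; 1; 4; 0; 1; 1; 0; 4; 2; 2]);
(4, [:: 0; 0; 0; 0; 0; 0; 0; 0; 0; 0; 1; 1; 0; 0; 0], [:: 1; 2; 4; 0; 0; 0; 1; 1; 3; 2; 1; 3; 3; 3; 2]);
(11, [:: 0; 0; 0; 0; 1; 0; 0; 0; 1; 0; 0; 0; 0; 0; 0], [:: 6; 1; 1; 4; 1; 2; 5; 2; 0; 1; 0; 0; 0; 2; 1]);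
(4, [:: 0; 0; 0; 0; 0; 0; 0; 0; 0; 0; 0; 0; 1; 0; 0], [:: 1; 6; 3; 0; 0; 2; 1; 2; 1; 3; 2; 3; 0; 1; 1]);
(11, [:: 0; 0; 0; 0; 0; 0; 0; 0; 1; 0; 0; 0; 0; 0; 1], [:: 1; 4; 2; 4; 1; 2; 5; 2; 0; 1; 0; 0; 1; 0; 3]);
(4, [:: 0; 0; 0; 0; 0; 0; 0; 0; 0; 0; 0; 0; 1; 1; 1], [:: 7; 4; 2; 0; 0; 5; 1; 0; 0; 2; 2; 3; 0; 0; 0]);
(4, [:: 0; 0; 0; 0; 0; 0; 0; 1; 0; 0; 0; 0; 0; 0; 1], [:: 1; 2; 5; 0; 0; 2; 1; 1; 3; 4; 2; 1; 1; 0; 3]);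
(11, [:: 0; 0; 0; 1; 0; 0; 0; 0; 0; 0; 0; 0; 0; 1; 0], [:: 2; 2; 4; 0; 2; 5; 1; 4; 1; 0; 1; 0; 2; 0; 2]);
(4, [:: 0; 0; 0; 0; 0; 0; 0; 0; 1; 0; 0; 0; 1; 0; 0], [:: 1; 0; 4; 2; 0; 4; 4; 1; 0; 1; 0; 3; 1; 3; 2]);
(8, [:: 0; 0; 0; 0; 0; 0; 0; 0; 0; 0; 0; 0; 0; 2; 0], [:: 1; 2; 1; 0; 3; 0; 5; 3; 0; 4; 2; 0; 2; 0; 3]);
(4, [:: 0; 0; 0; 0; 0; 0; 0; 0; 0; 0; 0; 1; 1; 0; 0], [:: 2; 0; 1; 4; 0; 2; 3; 3; 0; 3; 4; 1; 0; 2; 1]);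
(4, [:: 0; 0; 0; 0; 0; 0; 1; 0; 0; 0; 1; 0; 0; 1; 0], [:: 2; 4; 1; 0; 0; 6; 1; 1; 2; 2; 0; 3; 1; 3; 0])
].
Lemma certs_ok : all cert_ok certs.
Proof. vm_cast_no_check (erefl true). Qed.
Lemma certs_cov : cov 15 9 (map mkbox (map boxB certs)).
Proof. vm_cast_no_check (erefl true). Qed.

Local Close Scope ring_scope.
Definition lup : seq nat := [:: 0; 1; 1; 1; 1; 0; 1; 1; 1; 0; 1; 1; 0; 1; 0].
Definition hup : seq (seq nat) := [:: [:: 0; 1; 1; 1; 1; 0; 1; 1; 1; 0; 1; 1; 0; 1; 0];
 [:: 0; 0; 0; 0; 0; 0; 0; 0; 0; 0; 0; 0; 0; 0; 0];
 [:: 0; 0; 0; 0; 0; 0; 0; 0; 0; 0; 0; 0; 0; 0; 0];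
 [:: 0; 0; 0; 0; 0; 0; 0; 0; 0; 0; 0; 0; 0; 0; 0];
 [:: 0; 0; 0; 0; 0; 0; 0; 0; 0; 0; 0; 0; 0; 0; 0];
 [:: 0; 1; 1; 1; 1; 0; 1; 1; 1; 0; 1; 1; 0; 1; 0];
 [:: 0; 0; 0; 0; 0; 0; 0; 0; 0; 0; 0; 0; 0; 0; 0];
 [:: 0; 0; 0; 0; 0; 0; 0; 0; 0; 0; 0; 0; 0; 0; 0];
 [:: 0; 0; 0; 0; 0; 0; 0; 0; 0; 0; 0; 0; 0; 0; 0];
 [:: 0; 1; 1; 1; 1; 0; 1; 1; 1; 0; 1; 1; 0; 1; 0];
 [:: 0; 0; 0; 0; 0; 0; 0; 0; 0; 0; 0; 0; 0; 0; 0];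
 [:: 0; 0; 0; 0; 0; 0; 0; 0; 0; 0; 0; 0; 0; 0; 0];
 [:: 0; 1; 1; 1; 1; 0; 1; 1; 1; 0; 1; 1; 0; 1; 0];
 [:: 0; 0; 0; 0; 0; 0; 0; 0; 0; 0; 0; 0; 0; 0; 0];
 [:: 1; 2; 2; 2; 2; 1; 2; 2; 2; 1; 2; 2; 1; 2; 0]].

Definition upok (i : nat) : bool :=
  let h := nth [::] hup i in
  all (fun j => Qv h j <= nth 0 lup j + Sv h j) (iota 0 15) && (Qv h i < nth 0 lup i + Sv h i).

Lemma up_all : all upok (iota 0 15). Proof. by vm_compute. Qed.

Local Open Scope ring_scope.

Definition Dl (l : seq nat) : VT -> int := fun x => (nth 0%N l (idx x))%:Z.

Lemma up_pos : positive_rank ADJ (Dl lup).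
Proof.
move=> x; set i := idx x; set h := nth [::] hup i.
have Hi : (i < 15)%N by exact: idx_lt.
have := (allP up_all) i; rewrite mem_iota Hi => /(_ isT).
rewrite /upok; case/andP => Hall Hv; move/allP: Hall => Hall.
exists (fun w => Dl lup w - lap ADJ (fun y => (nth 0%N h (idx y))%:Z) w); split.
  exact: equiv_nat.
have HE : forall j, (j < 15)%N -> Dl lup (elem j) - lap ADJ (fun y => (nth 0%N h (idx y))%:Z) (elem j)
              = (nth 0%N lup j + Sv h j - Qv h j)%N%:Z.
  move=> j Hj; rewrite lap_glue // /Dl idx_elem //.
  have := Hall j; rewrite mem_iota Hj => /(_ isT) Hj'.
  rewrite -(subzn Hj') PoszD opprB addrA; congr (_ - _).
split.
  move=> w; rewrite -(elem_idx w) HE; [exact: le0z_nat | exact: idx_lt].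
rewrite -(elem_idx x) -/i HE; last exact: Hi.
rewrite ltz_nat subn_gt0; exact: Hv.
Qed.

Local Close Scope ring_scope.
Local Open Scope ring_scope.

Lemma up_deg : div_deg (Dl lup) = 10%:Z.
Proof.
rewrite /div_deg sum_VT.
rewrite (eq_big_seq (fun i => (nth 0%N lup i)%:Z)); last first.
  by move=> i; rewrite mem_iota /= => Hi; rewrite /Dl idx_elem.
by rewrite sumZ.
Qed.

Lemma lower (D : VT -> int) : positive_rank ADJ D -> 10%:Z <= div_deg D.
Proof.
move=> HD; rewrite leNgt; apply/negP => Hlt.
case: (HD x0) => D0 [Heq [Heff _]].
have Hdeg : div_deg D0 = div_deg D := deg_equiv (rook_sym T5_pos) (rook_irr T5_pos) Heq.
have HD0 := pos_equiv HD Heq.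
set d := div_deg D0.
have d0 : 0 <= d by apply: sumr_ge0 => w _; exact: Heff.
have d9 : d <= 9 by rewrite /d Hdeg; move: Hlt; lia.
pose F := fun w : VT => if w == x0 then 9 - d else 0.
have HF : effective F by move=> w; rewrite /F; case: (w == x0); lra.
set D1 := fun w => D0 w + F w.
have HD1 : positive_rank ADJ D1 := pos_add HD0 HF.
have Heff1 : effective D1 by move=> w; apply: addr_ge0; [exact: Heff | exact: HF].
have Hdeg1 : div_deg D1 = 9%:Z.
  rewrite /div_deg /D1 big_split /= -/(div_deg D0) -/d.
  rewrite (bigD1 x0) //= /F eqxx big1 ?addr0; first by ring.
  by move=> w /negbTE ->.
pose l := [seq absz (D1 (elem i)) | i <- iota 0 15].
have Hl : forall i, (i < 15)%N -> D1 (elem i) = (nth 0%N l i)%:Z.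
  move=> i Hi; rewrite (nth_map 0%N) ?size_iota // nth_iota // add0n.
  by rewrite gez0_abs //; exact: Heff1.
have Hsize : size l = 15%N by rewrite size_map size_iota.
have H9 : (sumn l)%:Z = 9%:Z.
  rewrite -sumZ -Hdeg1 /div_deg sum_VT; apply: eq_big_seq => i; rewrite mem_iota => /andP [_ Hi].
  by rewrite gez0_abs //; exact: Heff1.
have Hsum : sumn l = 9%N by case: H9.
have Hsz : forall b, b \in map boxB certs -> size b = 15%N.
  by move=> b /mapP [c _ ->]; case: c => [[v h] M]; rewrite /boxB size_map size_iota.
have [b [Hb Hle]] := cov_sound Hsz certs_cov Hsize Hsum.
case/mapP: Hb => c Hc Hbc; subst b.
apply: (@box_sound c D1) => //.
  exact: (allP certs_ok).
by move=> i Hi; rewrite Hl // lez_nat; exact: Hle.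
Qed.

Local Close Scope ring_scope.

Theorem theorem4p5 : is_gonality (rook_adj T5_pos) 10%:Z.
Proof.
split; last exact: lower.
by exists (Dl lup); split; [exact: up_pos | exact: up_deg].
Qed.
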